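(* Let $\rho\in\mathbb S^m(\mathbb R^n;\mathscr A_\theta)$, $m\in\mathbb R$. For every $s\in\mathbb R$, the operator $P_\rho$ extends uniquely to a continuous linear map $P_\rho:\mathcal H^{(s+m)}_\theta\to\mathcal H^{(s)}_\theta$. Moreover, $\rho\mapsto P_\rho$ is a continuous linear map from $\mathbb S^m(\mathbb R^n;\mathscr A_\theta)$ to $\mathscr L(\mathcal H^{(s+m)}_\theta,\mathcal H^{(s)}_\theta)$ (bounded operators with the operator norm topology).
   Context: Fix $n\ge 2$ and a real antisymmetric $n\times n$ matrix $\theta$. The noncommutative torus $A_\theta$ is the $C^*$-algebra generated by unitaries $U_1,\dots,U_n$ with $U_kU_j=e^{2i\pi\theta_{jk}}U_jU_k$; $U^k=U_1^{k_1}\cdots U_n^{k_n}$; $\|\cdot\|$ is the $C^*$-norm; $\tau$ is the continuous trace with $\tau(U^0)=1$, $\tau(U^k)=0$ for $k\ne0$. $\mathbb R^n$ acts by $*$-automorphisms $\alpha_s$ with $\alpha_s(U^k)=e^{is\cdot k}U^k$. $\mathscr A_\theta$ is the set of $u\in A_\theta$ with $s\mapsto\alpha_s(u)$ smooth, equivalently the sums $\sum u_kU^k$ with $(u_k)$ rapidly decreasing; $\delta_j(u)=-i\,\partial_{s_j}\alpha_s(u)|_{s=0}$, $\delta^\alpha=\delta_1^{\alpha_1}\cdots\delta_n^{\alpha_n}$; it is a Fréchet algebra for the seminorms $u\mapsto\|\delta^\alpha u\|$. $\mathscr A_\theta'$ is the strong dual of $\mathscr A_\theta$, containing $\mathscr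 A_\theta$ via $\langle u,v\rangle=\tau(uv)$; $u\in\mathscr A_\theta'$ has Fourier coefficients $u_k=\langle u,(U^k)^*\rangle$. $\mathcal H^{(s)}_\theta=\{u\in\mathscr A_\theta':\sum_k(1+|k|^2)^s|u_k|^2<\infty\}$ with norm $\|u\|_s=\big(\sum_k(1+|k|^2)^s|u_k|^2\big)^{1/2}$; $\mathscr A_\theta$ is dense in it. $\mathbb S^m(\mathbb R^n;\mathscr A_\theta)$ is the space of smooth $\rho:\mathbb R^n\to\mathscr A_\theta$ with $\|\delta^\alpha\partial_\xi^\beta\rho(\xi)\|\le C_{\alpha\beta}(1+|\xi|)^{m-|\beta|}$, Fréchet for the seminorms $p^{(m)}_N(\rho)=\sup_{|\alpha|+|\beta|\le N}\sup_\xi(1+|\xi|)^{-m+|\beta|}\|\delta^\alpha\partial_\xi^\beta\rho(\xi)\|$. $P_\rho:\mathscr A_\theta\to\mathscr A_\theta$ is the pseudodifferential operator $P_\rho u=\iint e^{is\cdot\xi}\rho(\xi)\alpha_{-s}(u)\,ds\,(2\pi)^{-n}d\xi$ (oscillating integral); concretely $P_\rho\big(\sum_ku_kU^k\big)=\sum_ku_k\rho(k)U^k$. *)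

(* Defs.v *)
From Stdlib Require Import Reals Lra Lia ZArith List ClassicalEpsilon.
From Coquelicot Require Import Coquelicot.
Open Scope R_scope.

(** Points of Z^n (resp. R^n, N^n) are functions [nat -> Z] (resp. [nat -> R],
    [nat -> nat]) vanishing at every index >= n; only such "valid" points are
    ever used. *)
Definition validZ (n : nat) (k : nat -> Z) : Prop := forall i, (n <= i)%nat -> k i = 0%Z.
Definition validR (n : nat) (x : nat -> R) : Prop := forall i, (n <= i)%nat -> x i = 0.
Definition validN (n : nat) (a : nat -> nat) : Prop := forall i, (n <= i)%nat -> a i = 0%nat.

Definition subZ (k l : nat -> Z) : nat -> Z := fun i => (k i - l i)%Z.
Definition toR (k : nat -> Z) : nat -> R := fun i => IZR (k i).

Definition isum (n : nat) (f : nat -> R) : R := fold_right (fun i acc => f i + acc) 0 (seq 0 n).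
Definition iprod (n : nat) (f : nat -> R) : R := fold_right (fun i acc => f i * acc) 1 (seq 0 n).

Definition normZ (n : nat) (k : nat -> Z) : R := sqrt (isum n (fun i => (IZR (k i))^2)).
Definition normR (n : nat) (x : nat -> R) : R := sqrt (isum n (fun i => (x i)^2)).
Definition mlen (n : nat) (a : nat -> nat) : nat := fold_right (fun i acc => (a i + acc)%nat) 0%nat (seq 0 n).

Definition incrN (a : nat -> nat) (j : nat) : nat -> nat :=
  fun i => if Nat.eqb i j then S (a i) else a i.
Definition shiftR (x : nat -> R) (j : nat) (h : R) : nat -> R :=
  fun i => if Nat.eqb i j then x i + h else x i.
Definition zeroN : nat -> nat := fun _ => 0%nat.

Definition finset (n : nat) (F : list (nat -> Z)) : Prop := NoDup F /\ List.Forall (validZ n) F.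

Definition sumC (F : list (nat -> Z)) (f : (nat -> Z) -> C) : C :=
  fold_right (fun k acc => Cplus (f k) acc) (RtoC 0) F.
Definition sumR (F : list (nat -> Z)) (f : (nat -> Z) -> R) : R :=
  fold_right (fun k acc => f k + acc) 0 F.

Definition has_sumC (n : nat) (f : (nat -> Z) -> C) (S : C) : Prop :=
  forall eps, 0 < eps -> exists F0, finset n F0 /\
    forall F, finset n F -> incl F0 F -> Cmod (Cminus (sumC F f) S) < eps.
Definition has_sumR (n : nat) (f : (nat -> Z) -> R) (S : R) : Prop :=
  forall eps, 0 < eps -> exists F0, finset n F0 /\
    forall F, finset n F -> incl F0 F -> Rabs (sumR F f - S) < eps.

(* the sum over Z^n of a summable family (arbitrary value otherwise) *)
Definition zsumC (n : nat) (f : (nat -> Z) -> C) : C :=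
  epsilon (inhabits (RtoC 0)) (has_sumC n f).
Definition zsumR (n : nat) (f : (nat -> Z) -> R) : R :=
  epsilon (inhabits 0) (has_sumR n f).

(** * Elements of A_theta / its dual are given by their Fourier coefficients
      [u : (nat -> Z) -> C], u = sum_k u_k U^k. *)

(* (u_k) rapidly decreasing, i.e. u in the smooth algebra \mathscr A_theta *)
Definition rapid (n : nat) (u : (nat -> Z) -> C) : Prop :=
  forall p : nat, exists M, forall k, validZ n k -> Cmod (u k) * (1 + normZ n k) ^ p <= M.

Definition kpow (n : nat) (a : nat -> nat) (k : nat -> Z) : R := iprod n (fun i => (IZR (k i)) ^ (a i)).
Definition delta (n : nat) (a : nat -> nat) (u : (nat -> Z) -> C) : (nat -> Z) -> C :=
  fun k => Cmult (RtoC (kpow n a k)) (u k).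

(* U^l U^j = cocycle theta l j U^(l+j), computed from U_k U_j = e^{2 i pi theta_jk} U_j U_k *)
Definition cocycle (n : nat) (theta : nat -> nat -> R) (l j : nat -> Z) : C :=
  let x := 2 * PI * isum n (fun i => isum n (fun i' =>
              if Nat.ltb i i' then theta i i' * IZR (l i') * IZR (j i) else 0)) in
  (cos x, sin x).

(* left regular (GNS of tau) representation on l^2(Z^n):
   (lambda(u) xi)_k = sum_l u_{k-l} c(k-l,l) xi_l, for xi supported in the finite set S *)
Definition lreg (n : nat) (theta : nat -> nat -> R) (u : (nat -> Z) -> C)
    (S : list (nat -> Z)) (xi : (nat -> Z) -> C) : (nat -> Z) -> C :=
  fun k => sumC S (fun l => Cmult (Cmult (u (subZ k l)) (cocycle n theta (subZ k l) l)) (xi l)).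

(* C*-norm bound ||u|| <= c, the C*-norm being the operator norm in the
   (faithful) regular representation, tested on finitely supported vectors *)
Definition cstar_le (n : nat) (theta : nat -> nat -> R) (u : (nat -> Z) -> C) (c : R) : Prop :=
  0 <= c /\
  forall S xi, finset n S -> forall F, finset n F ->
    sumR F (fun k => (Cmod (lreg n theta u S xi k))^2) <= c^2 * sumR S (fun l => (Cmod (xi l))^2).

Definition sweight (n : nat) (s : R) (k : nat -> Z) : R := Rpower (1 + (normZ n k)^2) s.
Definition in_Hs (n : nat) (s : R) (u : (nat -> Z) -> C) : Prop :=
  exists S, has_sumR n (fun k => sweight n s k * (Cmod (u k))^2) S.
Definition hs_norm (n : nat) (s : R) (u : (nat -> Z) -> C) : R :=
  sqrt (zsumR n (fun k => sweight n s k * (Cmod (u k))^2)).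

Definition Symb := (nat -> R) -> (nat -> Z) -> C.

(* f has partial derivative D in direction j at xi, in the Frechet topology of
   \mathscr A_theta (seminorms u |-> ||delta^alpha u||) *)
Definition has_pderiv (n : nat) (theta : nat -> nat -> R) (f : Symb) (xi : nat -> R) (j : nat)
    (D : (nat -> Z) -> C) : Prop :=
  forall a, validN n a -> forall eps, 0 < eps -> exists del, 0 < del /\
    forall h, 0 < Rabs h < del ->
      cstar_le n theta
        (delta n a (fun k => Cminus (Cdiv (Cminus (f (shiftR xi j h) k) (f xi k)) (RtoC h)) (D k))) eps.

(* D beta = d_xi^beta rho, all derivatives exist, valued in \mathscr A_theta *)
Definition deriv_family (n : nat) (theta : nat -> nat -> R) (rho : Symb)
    (D : (nat -> nat) -> Symb) : Prop :=
  D zeroN = rho /\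
  (forall b xi, validN n b -> validR n xi -> rapid n (D b xi)) /\
  (forall b xi j, validN n b -> validR n xi -> (j < n)%nat ->
     has_pderiv n theta (D b) xi j (D (incrN b j) xi)).

Definition in_symbol (n : nat) (theta : nat -> nat -> R) (m : R) (rho : Symb) : Prop :=
  exists D, deriv_family n theta rho D /\
    forall a b, validN n a -> validN n b -> exists c, forall xi, validR n xi ->
      cstar_le n theta (delta n a (D b xi)) (c * Rpower (1 + normR n xi) (m - INR (mlen n b))).

Definition sym_bound (n : nat) (theta : nat -> nat -> R) (m : R) (D : (nat -> nat) -> Symb)
    (N : nat) (M : R) : Prop :=
  forall a b, validN n a -> validN n b -> (mlen n a + mlen n b <= N)%nat ->
    forall xi, validR n xi ->
      cstar_le n theta (delta n a (D b xi)) (M * Rpower (1 + normR n xi) (m - INR (mlen n b))).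

(** * The pseudodifferential operator on \mathscr A_theta:
      P_rho (sum_k u_k U^k) = sum_k u_k rho(k) U^k, i.e.
      (P_rho u)_j = sum_k u_k rho(k)_{j-k} c(j-k,k). *)
Definition Prho (n : nat) (theta : nat -> nat -> R) (rho : Symb) (u : (nat -> Z) -> C) : (nat -> Z) -> C :=
  fun j => zsumC n (fun k => Cmult (Cmult (u k) (rho (toR k) (subZ j k))) (cocycle n theta (subZ j k) k)).

Definition eqv (n : nat) (u v : (nat -> Z) -> C) : Prop := forall k, validZ n k -> u k = v k.

Definition lincomb (a : C) (u : (nat -> Z) -> C) (b : C) (v : (nat -> Z) -> C) : (nat -> Z) -> C :=
  fun k => Cplus (Cmult a (u k)) (Cmult b (v k)).

Definition is_extension (n : nat) (theta : nat -> nat -> R) (rho : Symb) (s m : R)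
    (T : ((nat -> Z) -> C) -> ((nat -> Z) -> C)) : Prop :=
  (forall u, in_Hs n (s + m) u -> in_Hs n s (T u)) /\
  (forall u v a b, in_Hs n (s + m) u -> in_Hs n (s + m) v ->
     eqv n (T (lincomb a u b v)) (lincomb a (T u) b (T v))) /\
  (exists c, 0 <= c /\ forall u, in_Hs n (s + m) u -> hs_norm n s (T u) <= c * hs_norm n (s + m) u) /\
  (forall u, rapid n u -> eqv n (T u) (Prho n theta rho u)).

Definition antisym (n : nat) (theta : nat -> nat -> R) : Prop :=
  forall i j, (i < n)%nat -> (j < n)%nat -> theta i j = - theta j i.

(* Main.v *)
Require Import Defs.
From Stdlib Require Import Reals Lra Lia ZArith List ClassicalEpsilon FunctionalExtensionality PropExtensionality.
From Coquelicot Require Import Coquelicot.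
Open Scope R_scope.

Lemma sumR_nil f : sumR nil f = 0. Proof. reflexivity. Qed.
Lemma sumR_cons k F f : sumR (k :: F) f = f k + sumR F f. Proof. reflexivity. Qed.
Lemma sumR_app F G f : sumR (F ++ G) f = sumR F f + sumR G f.
Proof. induction F; simpl; [ring| rewrite IHF; ring]. Qed.
Lemma sumR_ext F f g : (forall k, In k F -> f k = g k) -> sumR F f = sumR F g.
Proof. induction F; simpl; intros; auto. rewrite H, IHF; auto. Qed.
Lemma sumR_le F f g : (forall k, In k F -> f k <= g k) -> sumR F f <= sumR F g.
Proof. induction F; simpl; intros. lra. pose proof (H a (or_introl eq_refl)). pose proof (IHF (fun k h => H k (or_intror h))). lra. Qed.
Lemma sumR_nonneg F f : (forall k, In k F -> 0 <= f k) -> 0 <= sumR F f.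
Proof. induction F; simpl; intros. lra. pose proof (H a (or_introl eq_refl)). pose proof (IHF (fun k h => H k (or_intror h))). lra. Qed.
Lemma sumR_zero F : sumR F (fun _ => 0) = 0.
Proof. induction F; simpl; auto. rewrite IHF; ring. Qed.
Lemma sumR_lin F f g a b : sumR F (fun k => a * f k + b * g k) = a * sumR F f + b * sumR F g.
Proof. induction F; simpl. ring. rewrite IHF; ring. Qed.
Lemma sumR_scal F f a : sumR F (fun k => a * f k) = a * sumR F f.
Proof. induction F; simpl. ring. rewrite IHF; ring. Qed.
Lemma sumR_plus F f g : sumR F (fun k => f k + g k) = sumR F f + sumR F g.
Proof. induction F; simpl. ring. rewrite IHF; ring. Qed.
Lemma sumR_map {A} (h : A -> nat -> Z) (F : list A) f :
  sumR (map h F) f = fold_right (fun k acc => f (h k) + acc) 0 F.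
Proof. induction F; simpl; auto. rewrite IHF; auto. Qed.
Lemma sumR_In_le F f k : (forall k, In k F -> 0 <= f k) -> In k F -> f k <= sumR F f.
Proof. induction F; simpl; intros. contradiction. destruct H0. subst.
 pose proof (sumR_nonneg F f (fun k h => H k (or_intror h))). lra.
 pose proof (IHF (fun k h => H k (or_intror h)) H0). pose proof (H a (or_introl eq_refl)). lra. Qed.
Lemma sumR_incl A B f : (forall k, In k B -> 0 <= f k) -> NoDup A -> incl A B -> sumR A f <= sumR B f.
Proof. revert B. induction A; intros B Hp Hn Hi; simpl.
 apply sumR_nonneg; auto.
 inversion Hn; subst. assert (In a B) by (apply Hi; left; auto).
 destruct (in_split _ _ H) as [B1 [B2 ->]].
 rewrite sumR_app; simpl.
 assert (sumR A f <= sumR (B1 ++ B2) f).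
 { apply IHA; auto. intros k hk; apply Hp; apply in_app_or in hk; apply in_or_app; simpl; tauto.
   intros k hk. assert (In k (B1 ++ a :: B2)) by (apply Hi; right; auto).
   apply in_app_or in H0; apply in_or_app; simpl in H0; destruct H0 as [|[|]]; subst; tauto. }
 rewrite sumR_app in H0. lra. Qed.

Lemma sumC_lin F f g (a b : C) : sumC F (fun k => Cplus (Cmult a (f k)) (Cmult b (g k))) = Cplus (Cmult a (sumC F f)) (Cmult b (sumC F g)).
Proof. induction F; simpl. apply injective_projections; simpl; ring.
 rewrite IHF. destruct (f a0), (g a0), (sumC F f), (sumC F g), a, b. apply injective_projections; simpl; ring. Qed.
Lemma sumC_Cmod F f : Cmod (sumC F f) <= sumR F (fun k => Cmod (f k)).
Proof. induction F; simpl. rewrite Cmod_0; lra. eapply Rle_trans. apply Cmod_triangle. lra. Qed.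
Lemma sumC_re F f : fst (sumC F f) = sumR F (fun k => fst (f k)).
Proof. induction F; simpl; auto. rewrite <- IHF; auto. Qed.
Lemma sumC_im F f : snd (sumC F f) = sumR F (fun k => snd (f k)).
Proof. induction F; simpl; auto. rewrite <- IHF; auto. Qed.

Definition fdec (x y : nat -> Z) : {x = y} + {x <> y} := excluded_middle_informative (x = y).

Lemma finset_union n F0 F1 : finset n F0 -> finset n F1 ->
  finset n (nodup fdec (F0 ++ F1)) /\ incl F0 (nodup fdec (F0 ++ F1)) /\ incl F1 (nodup fdec (F0 ++ F1)).
Proof. intros [_ H0] [_ H1]. split; [split|split].
 apply NoDup_nodup. apply Forall_forall. intros x hx. apply nodup_In in hx.
 apply in_app_or in hx. destruct hx; [eapply Forall_forall in H0|eapply Forall_forall in H1]; eauto.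
 intros x hx; apply nodup_In; apply in_or_app; auto.
 intros x hx; apply nodup_In; apply in_or_app; auto. Qed.

Lemma finset_In_valid n F k : finset n F -> In k F -> validZ n k.
Proof. intros [_ H] h. eapply Forall_forall in H; eauto. Qed.

Lemma finset_nil n : finset n nil.
Proof. split; constructor. Qed.

Lemma hasR_unique n f S1 S2 : has_sumR n f S1 -> has_sumR n f S2 -> S1 = S2.
Proof. intros H1 H2. apply Rminus_diag_uniq. apply Rabs_eq_0.
 destruct (Rle_lt_or_eq_dec 0 (Rabs (S1 - S2)) (Rabs_pos _)) as [h|h]; [|auto].
 exfalso. set (e := Rabs (S1 - S2) / 2).
 destruct (H1 e) as [F0 [HF0 HA]]. unfold e; lra.
 destruct (H2 e) as [F1 [HF1 HB]]. unfold e; lra.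
 destruct (finset_union n F0 F1 HF0 HF1) as [HU [I0 I1]].
 specialize (HA _ HU I0). specialize (HB _ HU I1).
 assert (Rabs (S1 - S2) <= Rabs (sumR (nodup fdec (F0 ++ F1)) f - S1) + Rabs (sumR (nodup fdec (F0 ++ F1)) f - S2)).
 { replace (S1 - S2) with (-(sumR (nodup fdec (F0 ++ F1)) f - S1) + (sumR (nodup fdec (F0 ++ F1)) f - S2)) by ring.
   eapply Rle_trans. apply Rabs_triang. rewrite Rabs_Ropp. lra. }
 unfold e in *. lra. Qed.

Lemma zsumR_eq n f S : has_sumR n f S -> zsumR n f = S.
Proof. intros H. unfold zsumR. apply (hasR_unique n f). apply epsilon_spec. eauto. auto. Qed.

Lemma hasR_partial n f S F : (forall k, validZ n k -> 0 <= f k) -> has_sumR n f S -> finset n F -> sumR F f <= S.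
Proof. intros Hp H HF. apply Rnot_lt_le; intro Hc.
 destruct (H (sumR F f - S)) as [F0 [HF0 HA]]. lra.
 destruct (finset_union n F0 F HF0 HF) as [HU [I0 I1]].
 specialize (HA _ HU I0).
 assert (sumR F f <= sumR (nodup fdec (F0 ++ F)) f).
 { apply sumR_incl; auto. intros k hk; apply Hp; eapply finset_In_valid; eauto. destruct HF; auto. }
 apply Rabs_def2 in HA. lra. Qed.

Lemma hasR_bound n f S B : has_sumR n f S -> (forall F, finset n F -> sumR F f <= B) -> S <= B.
Proof. intros H HB. apply Rnot_lt_le; intro Hc.
 destruct (H (S - B)) as [F0 [HF0 HA]]. lra.
 specialize (HA F0 HF0 (incl_refl _)). specialize (HB F0 HF0). apply Rabs_def2 in HA. lra. Qed.

Lemma hasR_sup n f B : (forall k, validZ n k -> 0 <= f k) -> (forall F, finset n F -> sumR F f <= B) ->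
  exists S, has_sumR n f S.
Proof. intros Hp HB.
 set (E := fun x => exists F, finset n F /\ x = sumR F f).
 destruct (completeness E) as [S [Hub Hl]].
 exists B. intros x [F [HF ->]]. auto.
 exists 0. exists nil. split. apply finset_nil. reflexivity.
 exists S. intros e he.
 assert (exists x, E x /\ S - e < x).
 { apply Classical_Prop.NNPP. intro hn. assert (is_upper_bound E (S - e)).
   { intros x hx. apply Rnot_lt_le. intro. apply hn. eauto. }
   specialize (Hl _ H). lra. }
 destruct H as [x [[F0 [HF0 ->]] hx]]. exists F0; split; auto.
 intros F HF Hi. assert (sumR F0 f <= sumR F f).
 { apply sumR_incl; auto. intros k hk; apply Hp; eapply finset_In_valid; eauto. destruct HF0; auto. }
 assert (sumR F f <= S) by (apply Hub; exists F; auto).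
 apply Rabs_def1; lra. Qed.

Lemma hasR_ext n f g S : (forall k, validZ n k -> f k = g k) -> has_sumR n f S -> has_sumR n g S.
Proof. intros He H e he. destruct (H e he) as [F0 [HF0 HA]]. exists F0; split; auto.
 intros F HF Hi. rewrite <- (sumR_ext F f g). auto. intros k hk; apply He; eapply finset_In_valid; eauto. Qed.

Lemma hasR_lin n f g S T a b : has_sumR n f S -> has_sumR n g T ->
  has_sumR n (fun k => a * f k + b * g k) (a * S + b * T).
Proof. intros H1 H2 e he. set (c := Rabs a + Rabs b + 1).
 assert (0 < c) by (unfold c; pose proof (Rabs_pos a); pose proof (Rabs_pos b); lra).
 destruct (H1 (e / c)) as [F0 [HF0 HA]]. apply Rdiv_lt_0_compat; auto.
 destruct (H2 (e / c)) as [F1 [HF1 HB]]. apply Rdiv_lt_0_compat; auto.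
 destruct (finset_union n F0 F1 HF0 HF1) as [HU [I0 I1]].
 exists (nodup fdec (F0 ++ F1)); split; auto. intros F HF Hi.
 specialize (HA F HF (incl_tran I0 Hi)). specialize (HB F HF (incl_tran I1 Hi)).
 rewrite sumR_lin. replace (a * sumR F f + b * sumR F g - (a * S + b * T)) with (a * (sumR F f - S) + b * (sumR F g - T)) by ring.
 eapply Rle_lt_trans. apply Rabs_triang. rewrite !Rabs_mult.
 assert (Rabs a * Rabs (sumR F f - S) <= Rabs a * (e / c)) by (apply Rmult_le_compat_l; [apply Rabs_pos|lra]).
 assert (Rabs b * Rabs (sumR F g - T) <= Rabs b * (e / c)) by (apply Rmult_le_compat_l; [apply Rabs_pos|lra]).
 assert ((Rabs a + Rabs b) * (e / c) < e).
 { unfold c. unfold c in H. apply (Rmult_lt_reg_r (Rabs a + Rabs b + 1)); auto. field_simplify; try lra. }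
 lra. Qed.

Lemma hasR_zero n : has_sumR n (fun _ => 0) 0.
Proof. intros e he. exists nil; split. apply finset_nil. intros. rewrite sumR_zero. rewrite Rminus_0_r, Rabs_R0; auto. Qed.

Lemma hasR_abs n f B : (forall F, finset n F -> sumR F (fun k => Rabs (f k)) <= B) -> exists S, has_sumR n f S.
Proof. intros HB.
 destruct (hasR_sup n (fun k => Rmax (f k) 0) B) as [S1 H1].
 intros; apply Rmax_r. intros F HF. eapply Rle_trans; [|apply (HB F HF)]. apply sumR_le. intros. unfold Rmax, Rabs; repeat destruct Rle_dec; repeat destruct Rcase_abs; lra.
 destruct (hasR_sup n (fun k => Rmax (- f k) 0) B) as [S2 H2].
 intros; apply Rmax_r. intros F HF. eapply Rle_trans; [|apply (HB F HF)]. apply sumR_le. intros. unfold Rmax, Rabs; repeat destruct Rle_dec; repeat destruct Rcase_abs; lra.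
 exists (1 * S1 + (-1) * S2). eapply hasR_ext; [|apply hasR_lin; eauto].
 intros k _. simpl. unfold Rmax; repeat destruct Rle_dec; lra. Qed.

Lemma Cmod_le_re_im (z : C) : Cmod z <= Rabs (fst z) + Rabs (snd z).
Proof. destruct z as [x y]. unfold Cmod; cbn [fst snd].
 pose proof (Rabs_pos x); pose proof (Rabs_pos y).
 rewrite <- (sqrt_pow2 (Rabs x + Rabs y)) by lra.
 apply sqrt_le_1_alt. rewrite <- (pow2_abs x), <- (pow2_abs y). nra. Qed.

Lemma hasC_of n f a b : has_sumR n (fun k => fst (f k)) a -> has_sumR n (fun k => snd (f k)) b -> has_sumC n f (a, b).
Proof. intros H1 H2 e he.
 destruct (H1 (e/2)) as [F0 [HF0 HA]]. lra. destruct (H2 (e/2)) as [F1 [HF1 HB]]. lra.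
 destruct (finset_union n F0 F1 HF0 HF1) as [HU [I0 I1]].
 exists (nodup fdec (F0 ++ F1)); split; auto. intros F HF Hi.
 specialize (HA F HF (incl_tran I0 Hi)). specialize (HB F HF (incl_tran I1 Hi)).
 eapply Rle_lt_trans. apply Cmod_le_re_im.
 replace (fst (Cminus (sumC F f) (a, b))) with (sumR F (fun k => fst (f k)) - a) by (rewrite <- sumC_re; simpl; ring).
 replace (snd (Cminus (sumC F f) (a, b))) with (sumR F (fun k => snd (f k)) - b) by (rewrite <- sumC_im; simpl; ring).
 lra. Qed.

Lemma hasC_abs n f B : (forall F, finset n F -> sumR F (fun k => Cmod (f k)) <= B) -> exists S, has_sumC n f S.
Proof. intros HB.
 destruct (hasR_abs n (fun k => fst (f k)) B) as [a Ha].
 intros F HF; eapply Rle_trans; [|apply (HB F HF)]. apply sumR_le; intros; apply re_le_Cmod.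
 destruct (hasR_abs n (fun k => snd (f k)) B) as [b Hb].
 intros F HF; eapply Rle_trans; [|apply (HB F HF)]. apply sumR_le; intros; eapply Rle_trans; [apply Rmax_r|apply Rmax_Cmod].
 exists (a, b). apply hasC_of; auto. Qed.

Lemma hasC_unique n f S1 S2 : has_sumC n f S1 -> has_sumC n f S2 -> S1 = S2.
Proof. intros H1 H2.
 assert (Cmod (Cminus S1 S2) = 0).
 { destruct (Rle_lt_or_eq_dec 0 (Cmod (Cminus S1 S2)) (Cmod_ge_0 _)) as [h|h]; [|auto].
 exfalso. set (e := Cmod (Cminus S1 S2) / 2).
 destruct (H1 e) as [F0 [HF0 HA]]. unfold e; lra.
 destruct (H2 e) as [F1 [HF1 HB]]. unfold e; lra.
 destruct (finset_union n F0 F1 HF0 HF1) as [HU [I0 I1]].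
 specialize (HA _ HU I0). specialize (HB _ HU I1).
 set (X := sumC (nodup fdec (F0 ++ F1)) f) in *.
 assert (Cmod (Cminus S1 S2) <= Cmod (Cminus X S1) + Cmod (Cminus X S2)).
 { replace (Cminus S1 S2) with (Cplus (Copp (Cminus X S1)) (Cminus X S2)).
   eapply Rle_trans. apply Cmod_triangle. rewrite Cmod_opp. lra.
   destruct X, S1, S2; apply injective_projections; simpl; ring. }
 unfold e in *. lra. }
 apply Cmod_eq_0 in H. destruct S1, S2. unfold Cminus, Cplus, Copp in H. simpl in H.
 injection H; intros; f_equal; lra. Qed.

Lemma zsumC_eq n f S : has_sumC n f S -> zsumC n f = S.
Proof. intros H. unfold zsumC. apply (hasC_unique n f). apply epsilon_spec. eauto. auto. Qed.

Lemma sumC_ext F f g : (forall k, f k = g k) -> sumC F f = sumC F g.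
Proof. intros H; induction F; simpl; auto. rewrite H, IHF; auto. Qed.

Lemma hasC_lin n f g h S T (a b : C) : has_sumC n f S -> has_sumC n g T ->
  (forall k, h k = Cplus (Cmult a (f k)) (Cmult b (g k))) ->
  has_sumC n h (Cplus (Cmult a S) (Cmult b T)).
Proof. intros H1 H2 Hh e he. set (c := Cmod a + Cmod b + 1).
 assert (0 < c) by (unfold c; pose proof (Cmod_ge_0 a); pose proof (Cmod_ge_0 b); lra).
 destruct (H1 (e / c)) as [F0 [HF0 HA]]. apply Rdiv_lt_0_compat; auto.
 destruct (H2 (e / c)) as [F1 [HF1 HB]]. apply Rdiv_lt_0_compat; auto.
 destruct (finset_union n F0 F1 HF0 HF1) as [HU [I0 I1]].
 exists (nodup fdec (F0 ++ F1)); split; auto. intros F HF Hi.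
 specialize (HA F HF (incl_tran I0 Hi)). specialize (HB F HF (incl_tran I1 Hi)).
 rewrite (sumC_ext F h _ Hh), sumC_lin.
 replace (Cminus (Cplus (Cmult a (sumC F f)) (Cmult b (sumC F g))) (Cplus (Cmult a S) (Cmult b T)))
   with (Cplus (Cmult a (Cminus (sumC F f) S)) (Cmult b (Cminus (sumC F g) T)))
   by (destruct (sumC F f), (sumC F g), S, T, a, b; apply injective_projections; simpl; ring).
 eapply Rle_lt_trans. apply Cmod_triangle. rewrite !Cmod_mult.
 assert (Cmod a * Cmod (Cminus (sumC F f) S) <= Cmod a * (e / c)) by (apply Rmult_le_compat_l; [apply Cmod_ge_0|lra]).
 assert (Cmod b * Cmod (Cminus (sumC F g) T) <= Cmod b * (e / c)) by (apply Rmult_le_compat_l; [apply Cmod_ge_0|lra]).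
 assert ((Cmod a + Cmod b) * (e / c) < e).
 { unfold c. unfold c in H. apply (Rmult_lt_reg_r (Cmod a + Cmod b + 1)); auto. field_simplify; try lra. }
 lra. Qed.

Lemma hasC_bound n f S B : has_sumC n f S -> (forall F, finset n F -> sumR F (fun k => Cmod (f k)) <= B) -> Cmod S <= B.
Proof. intros H HB. apply Rnot_lt_le; intro Hc.
 destruct (H (Cmod S - B)) as [F0 [HF0 HA]]. lra.
 specialize (HA F0 HF0 (incl_refl _)). specialize (HB F0 HF0).
 pose proof (sumC_Cmod F0 f).
 assert (Cmod S <= Cmod (Cminus (sumC F0 f) S) + Cmod (sumC F0 f)).
 { replace S with (Cplus (Copp (Cminus (sumC F0 f) S)) (sumC F0 f)) at 1.
   eapply Rle_trans. apply Cmod_triangle. rewrite Cmod_opp. lra.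
   destruct (sumC F0 f), S; apply injective_projections; simpl; ring. }
 lra. Qed.

Lemma hasR_list {A} n (G : list A) (g : A -> (nat -> Z) -> R) (Y : A -> R) :
  (forall j, In j G -> has_sumR n (g j) (Y j)) ->
  has_sumR n (fun k => fold_right (fun j acc => g j k + acc) 0 G) (fold_right (fun j acc => Y j + acc) 0 G).
Proof. induction G; simpl; intros H. apply hasR_zero.
 replace (Y a + fold_right (fun j acc => Y j + acc) 0 G) with (1 * Y a + 1 * fold_right (fun j acc => Y j + acc) 0 G) by ring.
 apply (hasR_ext n (fun k => 1 * g a k + 1 * fold_right (fun j acc => g j k + acc) 0 G)).
 intros; ring. apply hasR_lin. apply H; auto. apply IHG; auto. Qed.

Definition lsum {A} (F : list A) (f : A -> R) : R := fold_right (fun k acc => f k + acc) 0 F.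

Lemma lsum_app {A} (F G : list A) f : lsum (F ++ G) f = lsum F f + lsum G f.
Proof. induction F; simpl; [ring| rewrite IHF; ring]. Qed.
Lemma lsum_le {A} (F : list A) f g : (forall k, In k F -> f k <= g k) -> lsum F f <= lsum F g.
Proof. induction F; simpl; intros. lra. pose proof (H a (or_introl eq_refl)). pose proof (IHF (fun k h => H k (or_intror h))). lra. Qed.
Lemma lsum_nonneg {A} (F : list A) f : (forall k, In k F -> 0 <= f k) -> 0 <= lsum F f.
Proof. induction F; simpl; intros. lra. pose proof (H a (or_introl eq_refl)). pose proof (IHF (fun k h => H k (or_intror h))). lra. Qed.
Lemma lsum_ext {A} (F : list A) f g : (forall k, In k F -> f k = g k) -> lsum F f = lsum F g.
Proof. induction F; simpl; intros; auto. rewrite H, IHF; auto. Qed.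
Lemma lsum_scal {A} (F : list A) f c : lsum F (fun k => c * f k) = c * lsum F f.
Proof. induction F; simpl. ring. rewrite IHF; ring. Qed.
Lemma lsum_plus {A} (F : list A) f g : lsum F (fun k => f k + g k) = lsum F f + lsum F g.
Proof. induction F; simpl. ring. rewrite IHF; ring. Qed.
Lemma lsum_zero {A} (F : list A) : lsum F (fun _ => 0) = 0.
Proof. induction F; simpl; auto. rewrite IHF; ring. Qed.
Lemma lsum_map {A B} (h : A -> B) (F : list A) f : lsum (map h F) f = lsum F (fun x => f (h x)).
Proof. induction F; simpl; auto. rewrite IHF; auto. Qed.
Lemma lsum_incl {A} (X Y : list A) f : (forall k, In k Y -> 0 <= f k) -> NoDup X -> incl X Y -> lsum X f <= lsum Y f.
Proof. revert Y. induction X; intros Y Hp Hn Hi; simpl.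
 apply lsum_nonneg; auto.
 inversion Hn; subst. assert (In a Y) by (apply Hi; left; auto).
 destruct (in_split _ _ H) as [B1 [B2 ->]].
 rewrite lsum_app; simpl.
 assert (lsum X f <= lsum (B1 ++ B2) f).
 { apply IHX; auto. intros k hk; apply Hp; apply in_app_or in hk; apply in_or_app; simpl; tauto.
   intros k hk. assert (In k (B1 ++ a :: B2)) by (apply Hi; right; auto).
   apply in_app_or in H0; apply in_or_app; simpl in H0; destruct H0 as [|[|]]; subst; tauto. }
 rewrite lsum_app in H0. lra. Qed.

Lemma lsum_indic (zs : list Z) z0 c : NoDup zs -> In z0 zs -> lsum zs (fun z => if Z.eqb (z0) z then c else 0) = c.
Proof. induction zs; simpl; intros Hn Hi. contradiction. inversion Hn; subst.
 destruct (Z.eqb_spec z0 a).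
 - subst. rewrite (lsum_ext zs _ (fun _ => 0)). rewrite lsum_zero; ring.
   intros k hk. destruct (Z.eqb_spec a k); auto. subst; contradiction.
 - destruct Hi. congruence. rewrite IHzs; auto. ring. Qed.

Lemma lsum_partition {A} (F : list A) (key : A -> Z) zs f : NoDup zs -> (forall x, In x F -> In (key x) zs) ->
  lsum F f = lsum zs (fun z => lsum (filter (fun x => Z.eqb (key x) z) F) f).
Proof. intros Hn. induction F; simpl; intros Hk. rewrite lsum_zero; auto.
 rewrite (lsum_ext zs _ (fun z => (if Z.eqb (key a) z then f a else 0) + lsum (filter (fun x => Z.eqb (key x) z) F) f)).
 rewrite lsum_plus, lsum_indic, IHF; auto.
 intros z _. destruct (Z.eqb (key a) z); simpl; ring. Qed.

Lemma iprod_S n f : iprod (S n) f = iprod n f * f n.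
Proof. unfold iprod. rewrite seq_S, fold_right_app. simpl.
 generalize (f n). induction (seq 0 n); intros; simpl. ring. rewrite IHl. ring. Qed.
Lemma isum_S n f : isum (S n) f = isum n f + f n.
Proof. unfold isum. rewrite seq_S, fold_right_app. simpl.
 generalize (f n). induction (seq 0 n); intros; simpl. ring. rewrite IHl. ring. Qed.
Lemma iprod_ext n f g : (forall i, (i < n)%nat -> f i = g i) -> iprod n f = iprod n g.
Proof. induction n; intros; auto. rewrite !iprod_S, IHn, H; auto. Qed.
Lemma isum_ext n f g : (forall i, (i < n)%nat -> f i = g i) -> isum n f = isum n g.
Proof. induction n; intros; auto. rewrite !isum_S, IHn, H; auto. Qed.
Lemma iprod_pos n f : (forall i, (i < n)%nat -> 0 < f i) -> 0 < iprod n f.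
Proof. induction n; intros. unfold iprod; simpl; lra. rewrite iprod_S. apply Rmult_lt_0_compat; auto. Qed.
Lemma iprod_ge1 n f : (forall i, (i < n)%nat -> 1 <= f i) -> 1 <= iprod n f.
Proof. induction n; intros. unfold iprod; simpl; lra. rewrite iprod_S.
 assert (1 <= iprod n f) by auto. assert (1 <= f n) by auto. nra. Qed.
Lemma iprod_le n f g : (forall i, (i < n)%nat -> 0 <= f i <= g i) -> iprod n f <= iprod n g.
Proof. induction n; intros. unfold iprod; simpl; lra. rewrite !iprod_S.
 assert (0 <= iprod n f). { clear IHn. induction n. unfold iprod; simpl; lra. rewrite iprod_S. assert (0 <= f n) by (apply H; lia). assert (0 <= iprod n f) by (apply IHn; intros; apply H; lia). nra. }
 assert (iprod n f <= iprod n g) by auto. assert (0 <= f n <= g n) by auto. nra. Qed.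
Lemma iprod_const n c : iprod n (fun _ => c) = c ^ n.
Proof. induction n; auto. rewrite iprod_S, IHn. simpl; ring. Qed.
Lemma isum_nonneg n f : (forall i, (i < n)%nat -> 0 <= f i) -> 0 <= isum n f.
Proof. induction n; intros. unfold isum; simpl; lra. rewrite isum_S. assert (0 <= f n) by auto. assert (0 <= isum n f) by auto. lra. Qed.
Lemma isum_le n f g : (forall i, (i < n)%nat -> f i <= g i) -> isum n f <= isum n g.
Proof. induction n; intros. unfold isum; simpl; lra. rewrite !isum_S. assert (f n <= g n) by auto. assert (isum n f <= isum n g) by auto. lra. Qed.
Lemma isum_const n c : isum n (fun _ => c) = INR n * c.
Proof. induction n. unfold isum; simpl; ring. rewrite isum_S, IHn, S_INR. ring. Qed.
Lemma isum_term n f i : (forall i, (i < n)%nat -> 0 <= f i) -> (i < n)%nat -> f i <= isum n f.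
Proof. induction n; intros. lia. rewrite isum_S. destruct (Nat.eq_dec i n). subst.
 assert (0 <= isum n f) by (apply isum_nonneg; auto). lra.
 assert (f i <= isum n f) by (apply IHn; auto; lia). assert (0 <= f n) by auto. lra. Qed.

Definition hz (z : Z) : R := / (1 + IZR z ^ 2).
Definition gn (i : nat) : R := / (1 + INR i ^ 2).

Lemma hz_pos z : 0 < hz z.
Proof. unfold hz. apply Rinv_0_lt_compat. pose proof (pow2_ge_0 (IZR z)). lra. Qed.

Lemma gn_sum N : lsum (seq 0 (S N)) gn <= 3 - 2 / (INR N + 1).
Proof. induction N. unfold lsum; simpl fold_right. replace (gn 0) with 1 by (unfold gn; simpl; field).
 simpl INR. replace (2 / (0+1)) with 2 by field. lra.
 rewrite seq_S, lsum_app. simpl (lsum (_ :: nil) _). rewrite S_INR.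
 assert (gn (0 + S N) <= 2 / (INR N + 1) - 2 / (INR N + 1 + 1)).
 { unfold gn. replace (0 + S N)%nat with (S N) by lia. rewrite S_INR.
   pose proof (pos_INR N). 
   replace (2 / (INR N + 1) - 2 / (INR N + 1 + 1)) with (2 / ((INR N + 1) * (INR N + 1 + 1))) by (field; lra).
   replace (2 / ((INR N + 1) * (INR N + 1 + 1))) with (/ ((INR N + 1) * (INR N + 1 + 1) / 2)) by (field; lra).
   apply Rinv_le_contravar. nra. nra. }
 replace (0 + S N)%nat with (S N) in H by lia. lra. Qed.

Lemma gn_sum' N : lsum (seq 0 N) gn <= 3.
Proof. destruct N. simpl; lra. pose proof (gn_sum N). pose proof (pos_INR N).
 assert (0 < 2 / (INR N + 1)) by (apply Rdiv_lt_0_compat; lra). lra. Qed.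

Definition IR (R0 : nat) : list Z := map Z.of_nat (seq 0 (S R0)) ++ map (fun i => (- Z.of_nat (S i))%Z) (seq 0 R0).

Lemma IR_sum R0 : lsum (IR R0) hz <= 6.
Proof. unfold IR. rewrite lsum_app, !lsum_map.
 assert (lsum (seq 0 (S R0)) (fun x => hz (Z.of_nat x)) <= 3).
 { rewrite (lsum_ext _ _ gn). apply gn_sum'. intros; unfold hz, gn. rewrite <- INR_IZR_INZ; auto. }
 assert (lsum (seq 0 R0) (fun x => hz (- Z.of_nat (S x))) <= 3).
 { rewrite (lsum_ext _ _ (fun x => gn (S x))). rewrite <- lsum_map with (h := S). rewrite seq_shift.
   pose proof (gn_sum' (S R0)). simpl in H0. simpl. unfold gn at 1 in H0. simpl in H0.
   assert (0 <= 1 + 0 * (0 * 1)) by lra. assert (/ (1 + 0 * (0 * 1)) = 1) by (rewrite Rmult_0_l, Rplus_0_r; apply Rinv_1). lra.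
   intros; unfold hz, gn. rewrite opp_IZR, <- INR_IZR_INZ. f_equal. ring. }
 lra. Qed.

Lemma IR_in R0 z : (Z.abs_nat z <= R0)%nat -> In z (IR R0).
Proof. intros H. unfold IR. apply in_or_app. destruct (Z_le_gt_dec 0 z).
 left. apply in_map_iff. exists (Z.to_nat z). split. apply Z2Nat.id; auto. apply in_seq. lia.
 right. apply in_map_iff. exists (Z.to_nat (- z) - 1)%nat. split. lia. apply in_seq. lia. Qed.

Lemma sum1D (zs : list Z) : NoDup zs -> lsum zs hz <= 6.
Proof. intros Hn. set (R0 := fold_right (fun z acc => Z.abs_nat z + acc)%nat 0%nat zs).
 eapply Rle_trans; [|apply (IR_sum R0)]. apply lsum_incl; auto.
 intros; apply Rlt_le, hz_pos.
 intros z hz'. apply IR_in. unfold R0. clear Hn R0. induction zs; simpl in *. contradiction.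
 destruct hz'; subst. lia. specialize (IHzs H). lia. Qed.

Definition Pw (n : nat) (l : nat -> Z) : R := iprod n (fun i => 1 + IZR (l i) ^ 2).
Definition Kf (n : nat) (l : nat -> Z) : R := / Pw n l.

Lemma Pw_ge1 n l : 1 <= Pw n l.
Proof. apply iprod_ge1. intros. pose proof (pow2_ge_0 (IZR (l i))). lra. Qed.
Lemma Kf_pos n l : 0 < Kf n l.
Proof. unfold Kf. apply Rinv_0_lt_compat. pose proof (Pw_ge1 n l). lra. Qed.
Lemma Kf_le1 n l : Kf n l <= 1.
Proof. unfold Kf. rewrite <- Rinv_1. apply Rinv_le_contravar. lra. apply Pw_ge1. Qed.
Lemma Kf_S n l : Kf (S n) l = Kf n l * hz (l n).
Proof. unfold Kf, Pw, hz. rewrite iprod_S. rewrite Rinv_mult. auto. Qed.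

Definition cut (n : nat) (l : nat -> Z) : nat -> Z := fun i => if Nat.ltb i n then l i else 0%Z.

Lemma box n : forall F, finset n F -> lsum F (Kf n) <= 6 ^ n.
Proof. induction n; intros F [Hn Hv].
 - assert (forall x, In x F -> x = fun _ => 0%Z).
   { intros x hx. eapply Forall_forall in Hv; eauto. apply functional_extensionality; intros i. apply Hv. lia. }
   destruct F as [|a [|b F']]. simpl; lra.
   simpl. unfold Kf, Pw, iprod; simpl. rewrite Rinv_1; lra.
   exfalso. inversion Hn; subst. apply H2. left. rewrite (H a), (H b); simpl; auto.
 - set (zs := nodup Z.eq_dec (map (fun x => x n) F)).
   rewrite (lsum_partition F (fun x => x n) zs (Kf (S n))).
   2: apply NoDup_nodup. 2:{ intros x hx. apply nodup_In. apply (in_map (fun x => x n)); auto. }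
   apply Rle_trans with (lsum zs (fun z => hz z * 6 ^ n)).
   + apply lsum_le. intros z _.
     set (Fz := filter (fun x => Z.eqb (x n) z) F).
     rewrite (lsum_ext Fz _ (fun x => hz z * Kf n x)).
     2:{ intros x hx. unfold Fz in hx. apply filter_In in hx. destruct hx as [_ hx]. apply Z.eqb_eq in hx.
         rewrite Kf_S, hx. ring. }
     rewrite lsum_scal. apply Rmult_le_compat_l. apply Rlt_le, hz_pos.
     assert (HFz : forall x, In x Fz -> In x F /\ x n = z).
     { intros x hx. unfold Fz in hx. apply filter_In in hx. destruct hx; split; auto. apply Z.eqb_eq; auto. }
     rewrite (lsum_ext Fz _ (fun x => Kf n (cut n x))).
     2:{ intros x _. unfold Kf, Pw. f_equal. apply iprod_ext. intros i hi. unfold cut.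
         destruct (Nat.ltb_spec i n); auto; lia. }
     rewrite <- (lsum_map (cut n)). apply IHn. split.
     * apply NoDup_map_NoDup_ForallPairs. 2: apply NoDup_filter; auto.
       intros x y hx hy hxy. destruct (HFz x hx) as [hx1 hx2]. destruct (HFz y hy) as [hy1 hy2].
       apply functional_extensionality. intros i.
       destruct (Nat.lt_ge_cases i n).
       -- pose proof (equal_f hxy i). unfold cut in H0. destruct (Nat.ltb_spec i n); auto; lia.
       -- assert (Hval : forall x, In x F -> validZ (S n) x) by (intros; eapply Forall_forall; eauto).
          destruct (Nat.eq_dec i n). subst; congruence.
          rewrite (Hval x hx1 i ltac:(lia)), (Hval y hy1 i ltac:(lia)); auto.
     * apply Forall_forall. intros x hx. apply in_map_iff in hx. destruct hx as [y [<- _]].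
       intros i hi. unfold cut. destruct (Nat.ltb_spec i n); auto; lia.
   + rewrite (lsum_ext zs _ (fun z => 6 ^ n * hz z)) by (intros; ring).
     rewrite lsum_scal. simpl. pose proof (sum1D zs (NoDup_nodup _ _)).
     pose proof (pow_le 6 n ltac:(lra)). nra.
Qed.

Lemma trans_sum n G k : finset n G -> validZ n k -> lsum G (fun j => Kf n (subZ j k)) <= 6 ^ n.
Proof. intros [Hn Hv] Hk. rewrite <- (lsum_map (fun j => subZ j k)). apply box. split.
 apply NoDup_map_NoDup_ForallPairs; auto. intros x y _ _ h. apply functional_extensionality; intros i.
 pose proof (equal_f h i). unfold subZ in H. lia.
 apply Forall_forall. intros x hx. apply in_map_iff in hx. destruct hx as [y [<- hy]].
 assert (validZ n y) by (eapply Forall_forall; eauto). intros i hi. unfold subZ. rewrite H, Hk; auto. Qed.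

Lemma isum_lin n f g a b : isum n (fun i => a * f i + b * g i) = a * isum n f + b * isum n g.
Proof. induction n. unfold isum; simpl; ring. rewrite !isum_S, IHn. ring. Qed.

Definition wt (n : nat) (k : nat -> Z) : R := 1 + normZ n k ^ 2.

Lemma normZ_sq n k : normZ n k ^ 2 = isum n (fun i => IZR (k i) ^ 2).
Proof. unfold normZ. apply pow2_sqrt. apply isum_nonneg. intros; apply pow2_ge_0. Qed.

Lemma wt_ge1 n k : 1 <= wt n k.
Proof. unfold wt. pose proof (pow2_ge_0 (normZ n k)). lra. Qed.

Lemma Rpower_pos x y : 0 < Rpower x y.
Proof. unfold Rpower. apply exp_pos. Qed.

Lemma peetre_real A B C s : 0 < A -> 0 < B -> 0 < C -> A <= 2 * B * C -> B <= 2 * A * C ->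
  Rpower A s <= Rpower 2 (Rabs s) * Rpower B s * Rpower C (Rabs s).
Proof. intros hA hB hC h1 h2. destruct (Rle_dec 0 s).
 - rewrite Rabs_right by lra.
   rewrite (Rpower_mult_distr 2 B s), (Rpower_mult_distr (2*B) C s) by nra.
   apply Rle_Rpower_l; lra.
 - rewrite Rabs_left by lra. set (t := - s).
   replace s with (- t) by (unfold t; ring). rewrite !Rpower_Ropp.
   assert (Rpower B t <= Rpower 2 t * Rpower A t * Rpower C t).
   { rewrite (Rpower_mult_distr 2 A t), (Rpower_mult_distr (2*A) C t) by nra. apply Rle_Rpower_l. unfold t; lra. lra. }
   pose proof (Rpower_pos A t). pose proof (Rpower_pos B t). pose proof (Rpower_pos C t). pose proof (Rpower_pos 2 t).
   apply (Rmult_le_reg_r (Rpower A t * Rpower B t)). nra.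
   replace (/ Rpower A t * (Rpower A t * Rpower B t)) with (Rpower B t) by (field; lra).
   replace (Rpower 2 t * / Rpower B t * Rpower C t * (Rpower A t * Rpower B t)) with (Rpower 2 t * Rpower A t * Rpower C t) by (field; lra).
   auto. Qed.

Lemma wt_peetre n j k : validZ n j -> validZ n k ->
  wt n j <= 2 * wt n k * wt n (subZ j k) /\ wt n k <= 2 * wt n j * wt n (subZ j k).
Proof. intros hj hk. unfold wt. rewrite !normZ_sq.
 set (a := isum n (fun i => IZR (k i) ^ 2)). set (b := isum n (fun i => IZR (subZ j k i) ^ 2)).
 set (c := isum n (fun i => IZR (j i) ^ 2)).
 assert (0 <= a) by (apply isum_nonneg; intros; apply pow2_ge_0).
 assert (0 <= b) by (apply isum_nonneg; intros; apply pow2_ge_0).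
 assert (0 <= c) by (apply isum_nonneg; intros; apply pow2_ge_0).
 assert (c <= 2 * a + 2 * b).
 { unfold a, b, c. rewrite <- isum_lin. apply isum_le. intros i _. unfold subZ. rewrite minus_IZR.
   pose proof (pow2_ge_0 (IZR (k i) - (IZR (j i) - IZR (k i)))). nra. }
 assert (a <= 2 * c + 2 * b).
 { unfold a, b, c. rewrite <- isum_lin. apply isum_le. intros i _. unfold subZ. rewrite minus_IZR.
   pose proof (pow2_ge_0 (IZR (j i) + (IZR (j i) - IZR (k i)))). nra. }
 split; nra. Qed.

Lemma X_bound r m : 0 <= r -> Rpower (1 + r) m ^ 2 <= Rpower 2 (Rabs m) * Rpower (1 + r ^ 2) m.
Proof. intros hr.
 assert (Rpower (1 + r) m ^ 2 = Rpower ((1 + r) ^ 2) m).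
 { rewrite <- (Rpower_pow 2 (1 + r)) by lra. rewrite Rpower_mult. simpl (INR 2).
   replace ((1+1) * m) with (m + m) by ring. rewrite Rpower_plus. ring. }
 rewrite H. pose proof (peetre_real ((1+r)^2) (1 + r^2) 1 m).
 assert (Rpower 1 (Rabs m) = 1) by (unfold Rpower; rewrite ln_1, Rmult_0_r, exp_0; auto).
 rewrite H1 in H0. rewrite <- (Rmult_1_r (_ * Rpower (1 + r^2) m)). pose proof (pow2_ge_0 (1 - r)). apply H0; simpl; nra. Qed.

Fixpoint mu (x : nat -> R) (n : nat) : R := match n with O => 1 | S n' => Rmax (mu x n') (x n') end.

Lemma mu_ge1 x n : 1 <= mu x n.
Proof. induction n; simpl. lra. eapply Rle_trans; [|apply Rmax_l]. auto. Qed.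

Lemma mu_sum x n : 1 + isum n x <= INR (S n) * mu x n.
Proof. induction n. unfold isum; simpl; lra. rewrite isum_S. simpl mu.
 pose proof (Rmax_l (mu x n) (x n)). pose proof (Rmax_r (mu x n) (x n)). pose proof (pos_INR (S n)).
 rewrite (S_INR (S n)). nra. Qed.

Lemma mu_pow x n Q : (forall i, 0 <= x i) -> mu x n ^ Q <= 1 + isum n (fun i => x i ^ Q).
Proof. intros hx. induction n. simpl. rewrite pow1. unfold isum; simpl; lra.
 rewrite isum_S. simpl mu. pose proof (pow_le (x n) Q (hx n)).
 assert (0 <= isum n (fun i => x i ^ Q)) by (apply isum_nonneg; intros; apply pow_le; auto).
 unfold Rmax. destruct (Rle_dec (mu x n) (x n)); lra. Qed.

Lemma wt_pow n l Q : wt n l ^ Q <= INR (S n) ^ Q * (1 + isum n (fun i => IZR (l i) ^ (2 * Q))).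
Proof. unfold wt. rewrite normZ_sq. set (x := fun i => IZR (l i) ^ 2).
 assert (hx : forall i, 0 <= x i) by (intros; apply pow2_ge_0).
 rewrite (isum_ext n (fun i => IZR (l i) ^ (2 * Q)) (fun i => x i ^ Q)) by (intros; unfold x; cbv beta; rewrite <- pow_mult; auto).
 eapply Rle_trans. apply pow_incr. split. pose proof (isum_nonneg n x (fun i _ => hx i)). lra. apply mu_sum.
 rewrite Rpow_mult_distr. apply Rmult_le_compat_l. apply pow_le, pos_INR. apply mu_pow; auto. Qed.

Lemma Pw_le n l : Pw n l <= wt n l ^ n.
Proof. unfold Pw. rewrite <- iprod_const. apply iprod_le. intros i hi. split.
 pose proof (pow2_ge_0 (IZR (l i))); lra. unfold wt. rewrite normZ_sq.
 pose proof (isum_term n (fun i => IZR (l i) ^ 2) i (fun i _ => pow2_ge_0 _) hi). cbv beta in H. lra. Qed.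

Lemma Pw_decay n l s Q : Rabs s + 2 * INR n <= 2 * INR Q ->
  Rpower (wt n l) (Rabs s) * Pw n l ^ 2 <= wt n l ^ (2 * Q).
Proof. intros HQ. pose proof (wt_ge1 n l). pose proof (Pw_ge1 n l).
 assert (Pw n l ^ 2 <= wt n l ^ (2 * n)).
 { replace (2 * n)%nat with (n * 2)%nat by lia. rewrite pow_mult. apply pow_incr. split. lra. apply Pw_le. }
 assert (Rpower (wt n l) (Rabs s) <= wt n l ^ (2 * Q - 2 * n)).
 { rewrite <- Rpower_pow by lra. apply Rle_Rpower; auto. rewrite minus_INR by (apply INR_le; rewrite !mult_INR; simpl; pose proof (Rabs_pos s); lra).
   rewrite !mult_INR. simpl. lra. }
 replace (2 * Q)%nat with ((2 * Q - 2 * n) + 2 * n)%nat.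
 2:{ assert (Hle : INR (2 * n) <= INR (2 * Q)) by (rewrite !mult_INR; simpl; pose proof (Rabs_pos s); lra). apply INR_le in Hle. lia. }
 rewrite pow_add. pose proof (Rpower_pos (wt n l) (Rabs s)). pose proof (pow2_ge_0 (Pw n l)).
 apply Rmult_le_compat; auto; lra. Qed.

Definition CoefB (n Q : nat) (m : R) (rho : Symb) (M : R) : Prop :=
  forall xi l, validR n xi -> validZ n l ->
  Cmod (rho xi l) <= M * Rpower (1 + normR n xi) m /\
  forall i, (i < n)%nat -> IZR (l i) ^ (2 * Q) * Cmod (rho xi l) <= M * Rpower (1 + normR n xi) m.

Lemma isum_scal n f c : isum n (fun i => c * f i) = c * isum n f.
Proof. induction n. unfold isum; simpl; ring. rewrite !isum_S, IHn. ring. Qed.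

Lemma coef_wt n Q m rho M xi l : CoefB n Q m rho M -> validR n xi -> validZ n l ->
  Cmod (rho xi l) * wt n l ^ Q <= INR (S n) ^ (S Q) * (M * Rpower (1 + normR n xi) m).
Proof. intros HC hxi hl. destruct (HC xi l hxi hl) as [H0 H1].
 set (X := M * Rpower (1 + normR n xi) m) in *. set (r := Cmod (rho xi l)) in *.
 assert (0 <= r) by apply Cmod_ge_0.
 eapply Rle_trans. apply Rmult_le_compat_l; auto. apply wt_pow.
 assert (isum n (fun i => IZR (l i) ^ (2 * Q)) * r <= INR n * X).
 { rewrite Rmult_comm, <- isum_scal, <- isum_const. apply isum_le. intros. rewrite Rmult_comm. auto. }
 assert (0 <= INR (S n) ^ Q) by (apply pow_le, pos_INR).
 replace (INR (S n) ^ S Q * X) with (INR (S n) ^ Q * (X + INR n * X)) by (rewrite S_INR; simpl pow; ring).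
 replace (r * (INR (S n) ^ Q * (1 + isum n (fun i => IZR (l i) ^ (2 * Q)))))
   with (INR (S n) ^ Q * (r + isum n (fun i => IZR (l i) ^ (2 * Q)) * r)) by ring.
 apply Rmult_le_compat_l; auto. lra. Qed.

Lemma toR_valid n k : validZ n k -> validR n (toR k).
Proof. intros h i hi. unfold toR. rewrite h; auto. Qed.

Definition C1sq (n Q : nat) (s m : R) : R := Rpower 2 (Rabs s) * Rpower 2 (Rabs m) * (INR (S n) ^ (S Q)) ^ 2.

Lemma main_pt n Q m s rho M j k : CoefB n Q m rho M -> Rabs s + 2 * INR n <= 2 * INR Q ->
  validZ n j -> validZ n k ->
  sweight n s j * Cmod (rho (toR k) (subZ j k)) ^ 2 * Pw n (subZ j k) ^ 2 <= C1sq n Q s m * M ^ 2 * sweight n (s + m) k.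
Proof. intros HC HQ hj hk.
 assert (hl : validZ n (subZ j k)) by (intros i hi; unfold subZ; rewrite hj, hk; auto).
 pose proof (coef_wt n Q m rho M (toR k) (subZ j k) HC (toR_valid n k hk) hl) as h1.
 change (normR n (toR k)) with (normZ n k) in h1.
 change (sweight n s j) with (Rpower (wt n j) s). change (sweight n (s + m) k) with (Rpower (wt n k) (s + m)).
 set (l := subZ j k) in *. set (r := Cmod (rho (toR k) l)) in *.
 set (c2 := INR (S n) ^ (S Q)) in *. set (X := Rpower (1 + normZ n k) m) in *.
 assert (hr : 0 <= r) by apply Cmod_ge_0.
 assert (hX2 : X ^ 2 <= Rpower 2 (Rabs m) * Rpower (wt n k) m).
 { unfold X, wt. apply X_bound. apply sqrt_pos. }
 assert (hwl : 1 <= wt n l) by apply wt_ge1.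
 assert (h1' : r ^ 2 * (wt n l ^ Q) ^ 2 <= c2 ^ 2 * M ^ 2 * X ^ 2).
 { rewrite <- Rpow_mult_distr. replace (c2 ^ 2 * M ^ 2 * X ^ 2) with ((c2 * (M * X)) ^ 2) by ring.
   apply pow_incr. split; auto. apply Rmult_le_pos; auto. apply pow_le; lra. }
 destruct (wt_peetre n j k hj hk) as [p1 p2].
 pose proof (wt_ge1 n j). pose proof (wt_ge1 n k).
 assert (h3 : Rpower (wt n j) s <= Rpower 2 (Rabs s) * Rpower (wt n k) s * Rpower (wt n l) (Rabs s)).
 { apply peetre_real; auto; lra. }
 pose proof (Pw_decay n l s Q HQ) as h4.
 replace (2 * Q)%nat with (Q * 2)%nat in h4 by lia. rewrite pow_mult in h4.
 rewrite Rpower_plus. unfold C1sq. fold c2.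
 pose proof (Rpower_pos 2 (Rabs s)). pose proof (Rpower_pos 2 (Rabs m)).
 pose proof (Rpower_pos (wt n k) s). pose proof (Rpower_pos (wt n k) m). pose proof (Rpower_pos (wt n l) (Rabs s)).
 pose proof (Rpower_pos (wt n j) s).
 set (A2s := Rpower 2 (Rabs s)) in *. set (A2m := Rpower 2 (Rabs m)) in *.
 set (Wks := Rpower (wt n k) s) in *. set (Wkm := Rpower (wt n k) m) in *.
 set (Wls := Rpower (wt n l) (Rabs s)) in *. set (Wjs := Rpower (wt n j) s) in *.
 set (P := Pw n l) in *. set (V := (wt n l ^ Q)) in *.
 assert (0 <= r ^ 2) by apply pow2_ge_0. assert (0 <= P ^ 2) by apply pow2_ge_0.
 apply Rle_trans with (A2s * Wks * (Wls * P ^ 2) * r ^ 2).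
 { replace (A2s * Wks * (Wls * P ^ 2) * r ^ 2) with ((A2s * Wks * Wls) * (r ^ 2 * P ^ 2)) by ring.
   replace (Wjs * r ^ 2 * P ^ 2) with (Wjs * (r ^ 2 * P ^ 2)) by ring.
   apply Rmult_le_compat_r; nra. }
 apply Rle_trans with (A2s * Wks * (V ^ 2 * r ^ 2)).
 { replace (A2s * Wks * (V ^ 2 * r ^ 2)) with (A2s * Wks * V ^ 2 * r ^ 2) by ring. apply Rmult_le_compat_r; auto. apply Rmult_le_compat_l; nra. }
 apply Rle_trans with (A2s * Wks * (c2 ^ 2 * M ^ 2 * (A2m * Wkm))).
 { apply Rmult_le_compat_l. nra. eapply Rle_trans; [|apply Rmult_le_compat_l; [|apply hX2]].
   rewrite Rmult_comm; auto. apply Rmult_le_pos; apply pow2_ge_0. }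
 right; ring. Qed.

Lemma trans_sum2 n F j : finset n F -> validZ n j -> lsum F (fun k => Kf n (subZ j k)) <= 6 ^ n.
Proof. intros [Hn Hv] Hj. rewrite <- (lsum_map (fun k => subZ j k)). apply box. split.
 apply NoDup_map_NoDup_ForallPairs; auto. intros x y _ _ h. apply functional_extensionality; intros i.
 pose proof (equal_f h i). unfold subZ in H. lia.
 apply Forall_forall. intros x hx. apply in_map_iff in hx. destruct hx as [y [<- hy]].
 assert (validZ n y) by (eapply Forall_forall; eauto). intros i hi. unfold subZ. rewrite H, Hj; auto. Qed.

Lemma cs_list {A} (F : list A) a K : (forall k, In k F -> 0 <= K k) ->
  (lsum F (fun k => a k * K k)) ^ 2 <= lsum F K * lsum F (fun k => a k ^ 2 * K k).
Proof. induction F; simpl; intros HK. lra.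
 assert (IH := IHF (fun k h => HK k (or_intror h))).
 assert (h0 := HK a0 (or_introl eq_refl)).
 assert (hS : 0 <= lsum F K) by (apply lsum_nonneg; auto).
 assert (hB : 0 <= lsum F (fun k => a k ^ 2 * K k)) by (apply lsum_nonneg; intros; apply Rmult_le_pos; [apply pow2_ge_0|auto]).
 set (S := lsum F K) in *. set (B := lsum F (fun k => a k ^ 2 * K k)) in *.
 set (X := lsum F (fun k => a k * K k)) in *.
 assert (0 <= S * a a0 ^ 2 + B - 2 * a a0 * X).
 { destruct (Rle_lt_or_eq_dec 0 S hS).
   - apply (Rmult_le_reg_l S); auto. rewrite Rmult_0_r.
     pose proof (pow2_ge_0 (S * a a0 - X)). nra.
   - rewrite <- e in *. assert (hx2 : X ^ 2 <= 0) by lra. assert (hx0 : X = 0) by nra. rewrite hx0. nra. }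
 pose proof (Rmult_le_pos _ _ h0 H). change (lsum F (fun k : A => a k * (a k * 1) * K k)) with B. nra. Qed.

Lemma sq_le x y : 0 <= y -> x ^ 2 <= y ^ 2 -> x <= y.
Proof. intros. nra. Qed.

Lemma Cmod_cocycle n theta l j : Cmod (cocycle n theta l j) = 1.
Proof. unfold cocycle, Cmod. cbn [fst snd]. rewrite <- sqrt_1. f_equal.
 rewrite Rplus_comm. rewrite <- !Rsqr_pow2. apply sin2_cos2. Qed.

Lemma CoefB_nonneg n Q m rho M : CoefB n Q m rho M -> 0 <= M.
Proof. intros H. destruct (H (fun _ => 0) (fun _ => 0%Z)) as [h _]. intros i _; auto. intros i _; auto.
 pose proof (Cmod_ge_0 (rho (fun _ => 0) (fun _ => 0%Z))). pose proof (Rpower_pos (1 + normR n (fun _ => 0)) m). nra. Qed.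

Definition term n theta (rho : Symb) (u : (nat -> Z) -> C) j k :=
  Cmult (Cmult (u k) (rho (toR k) (subZ j k))) (cocycle n theta (subZ j k) k).

Lemma pt_lin n theta Q m s rho M u j k : CoefB n Q m rho M -> Rabs s + 2 * INR n <= 2 * INR Q ->
  validZ n j -> validZ n k ->
  sqrt (sweight n s j) * Cmod (term n theta rho u j k) <=
  sqrt (C1sq n Q s m) * M * (sqrt (sweight n (s + m) k) * Cmod (u k)) * Kf n (subZ j k).
Proof. intros HC HQ hj hk. pose proof (CoefB_nonneg _ _ _ _ _ HC) as hM.
 pose proof (main_pt n Q m s rho M j k HC HQ hj hk) as h.
 unfold term. rewrite !Cmod_mult, Cmod_cocycle, Rmult_1_r.
 assert (0 <= C1sq n Q s m) by (unfold C1sq; apply Rmult_le_pos; [apply Rmult_le_pos; apply Rlt_le, Rpower_pos | apply pow2_ge_0]).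
 assert (0 <= sweight n s j) by (apply Rlt_le, Rpower_pos).
 assert (0 <= sweight n (s + m) k) by (apply Rlt_le, Rpower_pos).
 pose proof (Kf_pos n (subZ j k)). pose proof (Pw_ge1 n (subZ j k)).
 assert (hPK : Pw n (subZ j k) * Kf n (subZ j k) = 1) by (unfold Kf; field; lra).
 apply sq_le. repeat apply Rmult_le_pos; auto using sqrt_pos, Cmod_ge_0; lra.
 rewrite !Rpow_mult_distr, !pow2_sqrt; auto.
 set (P := Pw n (subZ j k)) in *. set (K := Kf n (subZ j k)) in *.
 set (r := Cmod (rho (toR k) (subZ j k))) in *. set (U := Cmod (u k)).
 replace (sweight n s j * (U ^ 2 * r ^ 2)) with ((sweight n s j * r ^ 2 * P ^ 2) * (U ^ 2 * K ^ 2))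
   by (assert (hPK2 : P ^ 2 * K ^ 2 = 1) by (rewrite <- Rpow_mult_distr, hPK; ring);
       rewrite <- (Rmult_1_r (sweight n s j * (U ^ 2 * r ^ 2))) at 1; rewrite <- hPK2; ring).
 replace (C1sq n Q s m * M ^ 2 * (sweight n (s + m) k * U ^ 2) * K ^ 2) with ((C1sq n Q s m * M ^ 2 * sweight n (s + m) k) * (U ^ 2 * K ^ 2)) by ring.
 apply Rmult_le_compat_r; auto. apply Rmult_le_pos; apply pow2_ge_0. Qed.

Lemma sumR_lsum F f : sumR F f = lsum F f. Proof. reflexivity. Qed.

Lemma C1sq_nonneg n Q s m : 0 <= C1sq n Q s m.
Proof. unfold C1sq; apply Rmult_le_pos; [apply Rmult_le_pos; apply Rlt_le, Rpower_pos | apply pow2_ge_0]. Qed.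

Lemma existE n theta Q m s rho M u A :
  CoefB n Q m rho M -> Rabs s + 2 * INR n <= 2 * INR Q ->
  has_sumR n (fun k => sweight n (s + m) k * Cmod (u k) ^ 2) A ->
  (forall j, validZ n j -> exists S, has_sumC n (term n theta rho u j) S) /\
  exists B, has_sumR n (fun j => sweight n s j * Cmod (Prho n theta rho u j) ^ 2) B /\
     B <= C1sq n Q s m * M ^ 2 * (6 ^ n * 6 ^ n) * A.
Proof. intros HC HQ HA. pose proof (CoefB_nonneg _ _ _ _ _ HC) as hM.
 set (wU := fun k => sweight n (s + m) k * Cmod (u k) ^ 2) in *.
 assert (hwU : forall k, 0 <= wU k) by (intros; unfold wU; apply Rmult_le_pos; [apply Rlt_le, Rpower_pos|apply pow2_ge_0]).
 assert (hpA : forall F, finset n F -> sumR F wU <= A) by (intros; apply (hasR_partial n wU); auto).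
 assert (hA0 : 0 <= A) by (apply (hpA nil (finset_nil n))).
 set (g := fun j k => wU k * Kf n (subZ j k)).
 assert (hg : forall j k, 0 <= g j k) by (intros; unfold g; apply Rmult_le_pos; auto; apply Rlt_le, Kf_pos).
 assert (hgs : forall j, has_sumR n (g j) (zsumR n (g j))).
 { intros j. destruct (hasR_sup n (g j) A) as [Y HY]. auto.
   intros F HF. eapply Rle_trans; [|apply (hpA F HF)]. apply sumR_le. intros k _. unfold g.
   pose proof (Kf_le1 n (subZ j k)). pose proof (hwU k). nra.
   rewrite (zsumR_eq _ _ _ HY). auto. }
 set (Y := fun j => zsumR n (g j)).
 set (C1 := sqrt (C1sq n Q s m)).
 assert (hC1 : 0 <= C1) by apply sqrt_pos.
 assert (hY0 : forall j, 0 <= Y j).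
 { intros j. unfold Y. eapply Rle_trans; [|apply (hasR_partial n (g j) _ nil)]; auto. simpl; lra. apply finset_nil. }
 assert (Hpart : forall j F, validZ n j -> finset n F ->
   sumR F (fun k => Cmod (term n theta rho u j k)) <= C1 * M * sqrt (6 ^ n * Y j) / sqrt (sweight n s j)).
 { intros j F hj HF. pose proof (Rpower_pos (1 + normZ n j ^ 2) s) as hw.
   change (Rpower (1 + normZ n j ^ 2) s) with (sweight n s j) in hw.
   pose proof (sqrt_lt_R0 _ hw) as hsw.
   unfold Rdiv. apply (Rmult_le_reg_l (sqrt (sweight n s j))); auto.
   replace (sqrt (sweight n s j) * (C1 * M * sqrt (6 ^ n * Y j) * / sqrt (sweight n s j))) with (C1 * M * sqrt (6 ^ n * Y j)) by (field; lra).
   set (a := fun k => sqrt (sweight n (s + m) k) * Cmod (u k)).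
   apply Rle_trans with (C1 * M * sumR F (fun k => a k * Kf n (subZ j k))).
   { rewrite <- sumR_scal, <- sumR_scal. apply sumR_le. intros k hk.
     pose proof (pt_lin n theta Q m s rho M u j k HC HQ hj (finset_In_valid n F k HF hk)).
     fold C1 in H. unfold a. lra. }
   apply Rmult_le_compat_l. apply Rmult_le_pos; auto.
   apply sq_le. apply sqrt_pos. rewrite pow2_sqrt.
   2:{ apply Rmult_le_pos; auto. apply pow_le; lra. }
   rewrite sumR_lsum. eapply Rle_trans. apply cs_list. intros; apply Rlt_le, Kf_pos.
   apply Rmult_le_compat. apply lsum_nonneg; intros; apply Rlt_le, Kf_pos.
   apply lsum_nonneg; intros; apply Rmult_le_pos; [apply pow2_ge_0|apply Rlt_le, Kf_pos].
   apply trans_sum2; auto.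
   rewrite (lsum_ext F _ (g j)). apply (hasR_partial n (g j)); auto.
   intros k _. unfold g, a, wU. rewrite Rpow_mult_distr, pow2_sqrt; auto. apply Rlt_le, Rpower_pos. }
 assert (Hsum : forall j, validZ n j -> exists S, has_sumC n (term n theta rho u j) S).
 { intros j hj. apply (hasC_abs n _ (C1 * M * sqrt (6 ^ n * Y j) / sqrt (sweight n s j))). intros F HF; apply Hpart; auto. }
 split; auto.
 assert (Hv : forall j, validZ n j -> sweight n s j * Cmod (Prho n theta rho u j) ^ 2 <= C1sq n Q s m * M ^ 2 * 6 ^ n * Y j).
 { intros j hj. destruct (Hsum j hj) as [S HS].
   change (Prho n theta rho u j) with (zsumC n (term n theta rho u j)). rewrite (zsumC_eq _ _ _ HS).
   pose proof (hasC_bound n _ S _ HS (fun F HF => Hpart j F hj HF)) as hb.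
   pose proof (Rpower_pos (1 + normZ n j ^ 2) s) as hw.
   change (Rpower (1 + normZ n j ^ 2) s) with (sweight n s j) in hw.
   pose proof (sqrt_lt_R0 _ hw) as hsw.
   assert (sqrt (sweight n s j) * Cmod S <= C1 * M * sqrt (6 ^ n * Y j)).
   { apply (Rmult_le_compat_l (sqrt (sweight n s j))) in hb. 2: lra.
     replace (sqrt (sweight n s j) * (C1 * M * sqrt (6 ^ n * Y j) / sqrt (sweight n s j))) with (C1 * M * sqrt (6 ^ n * Y j)) in hb by (field; lra). auto. }
   assert (0 <= 6 ^ n * Y j) by (apply Rmult_le_pos; auto; apply pow_le; lra).
   pose proof (Cmod_ge_0 S).
   assert ((sqrt (sweight n s j) * Cmod S) ^ 2 <= (C1 * M * sqrt (6 ^ n * Y j)) ^ 2).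
   { apply pow_incr. split; auto. apply Rmult_le_pos; auto. lra. }
   rewrite !Rpow_mult_distr, !pow2_sqrt in H2; try lra. unfold C1 in H2. rewrite pow2_sqrt in H2 by apply C1sq_nonneg. lra. }
 assert (HGY : forall G, finset n G -> lsum G Y <= 6 ^ n * A).
 { intros G HG. pose proof (hasR_list n G g Y (fun j _ => hgs j)) as HL.
   apply (hasR_bound n _ _ _ HL). intros F HF.
   apply Rle_trans with (sumR F (fun k => 6 ^ n * wU k)).
   { apply sumR_le. intros k hk. change (fold_right (fun j acc => g j k + acc) 0 G) with (lsum G (fun j => g j k)).
     unfold g. rewrite (lsum_scal G (fun j => Kf n (subZ j k)) (wU k)).
     rewrite Rmult_comm. apply Rmult_le_compat_r; auto. apply trans_sum; auto. eapply finset_In_valid; eauto. }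
   rewrite sumR_scal. apply Rmult_le_compat_l. apply pow_le; lra. auto. }
 set (Bd := C1sq n Q s m * M ^ 2 * (6 ^ n * 6 ^ n) * A).
 assert (HB : forall G, finset n G -> sumR G (fun j => sweight n s j * Cmod (Prho n theta rho u j) ^ 2) <= Bd).
 { intros G HG. apply Rle_trans with (sumR G (fun j => C1sq n Q s m * M ^ 2 * 6 ^ n * Y j)).
   apply sumR_le. intros j hj. apply Hv. eapply finset_In_valid; eauto.
   rewrite sumR_scal, sumR_lsum. unfold Bd.
   pose proof (HGY G HG). assert (0 <= C1sq n Q s m * M ^ 2 * 6 ^ n).
   { apply Rmult_le_pos. apply Rmult_le_pos. apply C1sq_nonneg. apply pow2_ge_0. apply pow_le; lra. }
   replace (C1sq n Q s m * M ^ 2 * (6 ^ n * 6 ^ n) * A) with (C1sq n Q s m * M ^ 2 * 6 ^ n * (6 ^ n * A)) by ring.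
   apply Rmult_le_compat_l; auto. }
 destruct (hasR_sup n (fun j => sweight n s j * Cmod (Prho n theta rho u j) ^ 2) Bd) as [B HBs]; auto.
 intros; apply Rmult_le_pos; [apply Rlt_le, Rpower_pos|apply pow2_ge_0].
 exists B; split; auto. apply (hasR_bound n _ _ _ HBs HB). Qed.

Lemma existE2 n theta Q m s rho M u :
  CoefB n Q m rho M -> Rabs s + 2 * INR n <= 2 * INR Q -> in_Hs n (s + m) u ->
  (forall j, validZ n j -> exists S, has_sumC n (term n theta rho u j) S) /\
  in_Hs n s (Prho n theta rho u) /\
  hs_norm n s (Prho n theta rho u) <= (sqrt (C1sq n Q s m) * 6 ^ n) * M * hs_norm n (s + m) u.
Proof. intros HC HQ [A HA]. pose proof (CoefB_nonneg _ _ _ _ _ HC) as hM.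
 destruct (existE n theta Q m s rho M u A HC HQ HA) as [H1 [B [HB HBb]]].
 split; auto. split. exists B; auto.
 unfold hs_norm. rewrite (zsumR_eq _ _ _ HB), (zsumR_eq _ _ _ HA).
 assert (hA0 : 0 <= A).
 { eapply Rle_trans; [|apply (hasR_partial n (fun k => sweight n (s + m) k * Cmod (u k) ^ 2) _ nil)]; eauto. simpl; lra.
   intros; apply Rmult_le_pos; [apply Rlt_le, Rpower_pos|apply pow2_ge_0]. apply finset_nil. }
 eapply Rle_trans. apply sqrt_le_1_alt. apply HBb.
 replace (C1sq n Q s m * M ^ 2 * (6 ^ n * 6 ^ n) * A) with ((sqrt (C1sq n Q s m) * 6 ^ n * M) ^ 2 * A).
 rewrite sqrt_mult_alt. rewrite sqrt_pow2. lra.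
 apply Rmult_le_pos; auto. apply Rmult_le_pos; [apply sqrt_pos| apply pow_le; lra]. apply pow2_ge_0.
 rewrite !Rpow_mult_distr, pow2_sqrt by apply C1sq_nonneg. ring. Qed.

Definition inb (F0 : list (nat -> Z)) k : bool := if excluded_middle_informative (In k F0) then true else false.
Definition trunc F0 (u : (nat -> Z) -> C) : (nat -> Z) -> C := fun k => if inb F0 k then u k else RtoC 0.
Definition dpart F0 (u : (nat -> Z) -> C) := lincomb (RtoC 1) u (RtoC (-1)) (trunc F0 u).

Lemma inb_spec F0 k : inb F0 k = true <-> In k F0.
Proof. unfold inb. destruct excluded_middle_informative; split; auto; discriminate. Qed.

Lemma hasR_nonneg_zsum n f S : (forall k, validZ n k -> 0 <= f k) -> has_sumR n f S -> 0 <= S.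
Proof. intros. eapply Rle_trans; [|apply (hasR_partial n f S nil)]; auto. simpl; lra. apply finset_nil. Qed.

Lemma in_Hs_sb n s u B : (forall F, finset n F -> sumR F (fun k => sweight n s k * Cmod (u k) ^ 2) <= B) ->
  in_Hs n s u /\ zsumR n (fun k => sweight n s k * Cmod (u k) ^ 2) <= B.
Proof. intros H. destruct (hasR_sup n (fun k => sweight n s k * Cmod (u k) ^ 2) B) as [S HS]; auto.
 intros; apply Rmult_le_pos; [apply Rlt_le, Rpower_pos|apply pow2_ge_0].
 split. exists S; auto. rewrite (zsumR_eq _ _ _ HS). apply (hasR_bound n _ _ _ HS H). Qed.

Lemma in_Hs_partial n s u F : in_Hs n s u -> finset n F ->
  sumR F (fun k => sweight n s k * Cmod (u k) ^ 2) <= zsumR n (fun k => sweight n s k * Cmod (u k) ^ 2).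
Proof. intros [S HS] HF. rewrite (zsumR_eq _ _ _ HS). apply (hasR_partial n _ _ _); auto.
 intros; apply Rmult_le_pos; [apply Rlt_le, Rpower_pos|apply pow2_ge_0]. Qed.

Lemma trunc_rapid n F0 u : rapid n (trunc F0 u).
Proof. intros p. exists (lsum F0 (fun k => Cmod (u k) * (1 + normZ n k) ^ p)). intros k hk.
 unfold trunc. destruct (inb F0 k) eqn:E.
 - apply inb_spec in E. change (Cmod (u k) * (1 + normZ n k) ^ p <= lsum F0 (fun k => Cmod (u k) * (1 + normZ n k) ^ p)).
   apply (sumR_In_le F0 (fun k => Cmod (u k) * (1 + normZ n k) ^ p)); auto.
   intros; apply Rmult_le_pos. apply Cmod_ge_0. apply pow_le. pose proof (sqrt_pos (isum n (fun i => IZR (k0 i) ^ 2))). unfold normZ; lra.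
 - rewrite Cmod_0, Rmult_0_l. apply lsum_nonneg. intros; apply Rmult_le_pos. apply Cmod_ge_0. apply pow_le. pose proof (sqrt_pos (isum n (fun i => IZR (k0 i) ^ 2))). unfold normZ; lra. Qed.

Lemma trunc_Hs n s F0 u : in_Hs n s u -> in_Hs n s (trunc F0 u).
Proof. intros Hu. apply (in_Hs_sb n s _ (zsumR n (fun k => sweight n s k * Cmod (u k) ^ 2))). intros F HF.
 eapply Rle_trans; [|apply (in_Hs_partial n s u F Hu HF)]. apply sumR_le. intros k _.
 unfold trunc. destruct (inb F0 k). lra. rewrite Cmod_0. replace (0 ^ 2) with 0 by ring. rewrite Rmult_0_r.
 apply Rmult_le_pos; [apply Rlt_le, Rpower_pos | apply pow2_ge_0]. Qed.

Lemma dpart_val F0 u k : dpart F0 u k = if inb F0 k then RtoC 0 else u k.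
Proof. unfold dpart, lincomb, trunc. destruct (inb F0 k); destruct (u k); apply injective_projections; simpl; ring. Qed.

Lemma sumR_filter F (P : (nat -> Z) -> bool) f : sumR F (fun k => if P k then 0 else f k) = sumR (filter (fun k => negb (P k)) F) f.
Proof. induction F; simpl; auto. destruct (P a); simpl; rewrite IHF; ring. Qed.

Lemma dpart_small n s u A F0 eps : has_sumR n (fun k => sweight n s k * Cmod (u k) ^ 2) A -> finset n F0 ->
  (forall F, finset n F -> incl F0 F -> Rabs (sumR F (fun k => sweight n s k * Cmod (u k) ^ 2) - A) < eps) ->
  in_Hs n s (dpart F0 u) /\ zsumR n (fun k => sweight n s k * Cmod (dpart F0 u k) ^ 2) <= 2 * eps.
Proof. intros HA HF0 Heps. apply in_Hs_sb. intros G HG.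
 set (wU := fun k => sweight n s k * Cmod (u k) ^ 2).
 rewrite (sumR_ext G _ (fun k => if inb F0 k then 0 else wU k)).
 2:{ intros k _. rewrite dpart_val. unfold wU. destruct (inb F0 k); auto. rewrite Cmod_0. simpl; ring. }
 rewrite sumR_filter. set (G' := filter (fun k => negb (inb F0 k)) G).
 assert (HF' : finset n (F0 ++ G')).
 { destruct HF0 as [N0 V0]. destruct HG as [NG VG]. split.
   apply NoDup_app; auto. apply NoDup_filter; auto.
   intros a ha hb. unfold G' in hb. apply filter_In in hb. destruct hb as [_ hb].
   apply inb_spec in ha. rewrite ha in hb. discriminate.
   apply Forall_app; split; auto. apply Forall_forall. intros x hx. unfold G' in hx. apply filter_In in hx.
   eapply Forall_forall in VG; eauto. tauto. }
 pose proof (Heps _ HF' (incl_appl _ (incl_refl _))). pose proof (Heps _ HF0 (incl_refl _)).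
 rewrite sumR_app in H. fold wU in H, H0. apply Rabs_def2 in H. apply Rabs_def2 in H0. lra. Qed.

Lemma density n s m (Phi : ((nat -> Z) -> C) -> (nat -> Z) -> C) c : 0 <= c ->
  (forall d, in_Hs n (s + m) d -> forall G, finset n G ->
     sumR G (fun k => sweight n s k * Cmod (Phi d k) ^ 2) <= c * zsumR n (fun k => sweight n (s + m) k * Cmod (d k) ^ 2)) ->
  (forall u F0, in_Hs n (s + m) u -> finset n F0 -> eqv n (Phi u) (Phi (dpart F0 u))) ->
  forall u, in_Hs n (s + m) u -> eqv n (Phi u) (fun _ => RtoC 0).
Proof. intros hc H1 H2 u [A HA] k hk.
 assert (hw : 0 < sweight n s k) by apply Rpower_pos.
 assert (sweight n s k * Cmod (Phi u k) ^ 2 <= 0).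
 { apply Rnot_lt_le. intro hpos. set (X := sweight n s k * Cmod (Phi u k) ^ 2) in *.
   set (eps := X / (2 * (2 * c + 1))).
   assert (he : 0 < eps) by (unfold eps; apply Rdiv_lt_0_compat; lra).
   destruct (HA eps he) as [F0 [HF0 Heps]].
   destruct (dpart_small n (s + m) u A F0 eps HA HF0 Heps) as [Hd Hz].
   assert (HFk : finset n (k :: nil)) by (split; [constructor; auto; constructor|constructor; auto]).
   pose proof (H1 _ Hd _ HFk) as hb. rewrite sumR_cons, sumR_nil, Rplus_0_r in hb.
   rewrite <- (H2 u F0 (ex_intro _ A HA) HF0 k hk) in hb.
   assert (c * zsumR n (fun k => sweight n (s + m) k * Cmod (dpart F0 u k) ^ 2) <= c * (2 * eps)) by (apply Rmult_le_compat_l; auto).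
   fold X in hb. assert (X <= 2 * c * eps) by lra.
   unfold eps in H. assert (2 * c * (X / (2 * (2 * c + 1))) < X).
   { replace (2 * c * (X / (2 * (2 * c + 1)))) with (X * (c / (2 * c + 1))) by (field; lra).
     assert (c / (2 * c + 1) < 1). { unfold Rdiv; apply (Rmult_lt_reg_r (2*c+1)); [lra|]; rewrite Rmult_assoc, Rinv_l by lra; lra. }
     nra. }
   lra. }
 assert (Cmod (Phi u k) ^ 2 <= 0) by (apply (Rmult_le_reg_l (sweight n s k)); auto; lra).
 assert (Cmod (Phi u k) = 0) by (pose proof (Cmod_ge_0 (Phi u k)); nra).
 apply Cmod_eq_0; auto. Qed.

Ltac Csolve := repeat match goal with | c : C |- _ => destruct c end; apply injective_projections; simpl; ring.

Lemma alg1 (x y x' : C) : Cminus (Cplus (Cmult (RtoC 1) x) (Cmult (RtoC 1) y)) (Cplus (Cmult (RtoC 1) x') (Cmult (RtoC 1) y)) = Cminus x x'.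
Proof. Csolve. Qed.
Lemma alg2 (a b x3 y3 x1 y1 x2 y2 : C) : y3 = Cplus (Cmult a y1) (Cmult b y2) ->
  Cminus (Cplus (Cmult (RtoC 1) x3) (Cmult (RtoC 1) y3))
    (Cplus (Cmult a (Cplus (Cmult (RtoC 1) x1) (Cmult (RtoC 1) y1))) (Cmult b (Cplus (Cmult (RtoC 1) x2) (Cmult (RtoC 1) y2))))
  = Cminus x3 (Cplus (Cmult a x1) (Cmult b x2)).
Proof. intros ->. Csolve. Qed.
Lemma alg_split (u d t : C) : d = Cplus (Cmult (RtoC 1) u) (Cmult (RtoC (-1)) t) -> u = Cplus (Cmult (RtoC 1) d) (Cmult (RtoC 1) t).
Proof. intros ->. Csolve. Qed.
Lemma alg_term (uk r1 r2 c a b : C) : Cmult (Cmult uk (Cplus (Cmult a r1) (Cmult b r2))) c =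
  Cplus (Cmult a (Cmult (Cmult uk r1) c)) (Cmult b (Cmult (Cmult uk r2) c)).
Proof. Csolve. Qed.

Lemma Cmod_minus_sq (x y : C) : Cmod (Cminus x y) ^ 2 <= 2 * Cmod x ^ 2 + 2 * Cmod y ^ 2.
Proof. assert (Cmod (Cminus x y) <= Cmod x + Cmod y).
 { unfold Cminus. eapply Rle_trans. apply Cmod_triangle. rewrite Cmod_opp. lra. }
 pose proof (Cmod_ge_0 (Cminus x y)). pose proof (Cmod_ge_0 x). pose proof (Cmod_ge_0 y).
 assert (Cmod (Cminus x y) ^ 2 <= (Cmod x + Cmod y) ^ 2) by (apply pow_incr; lra).
 pose proof (pow2_ge_0 (Cmod x - Cmod y)). nra. Qed.

Lemma Cmod_lc_sq (x y z a b : C) : Cmod (Cminus x (Cplus (Cmult a y) (Cmult b z))) ^ 2 <=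
  3 * Cmod x ^ 2 + 3 * Cmod a ^ 2 * Cmod y ^ 2 + 3 * Cmod b ^ 2 * Cmod z ^ 2.
Proof. assert (Cmod (Cminus x (Cplus (Cmult a y) (Cmult b z))) <= Cmod x + Cmod a * Cmod y + Cmod b * Cmod z).
 { unfold Cminus. eapply Rle_trans. apply Cmod_triangle. rewrite Cmod_opp.
   pose proof (Cmod_triangle (Cmult a y) (Cmult b z)). rewrite !Cmod_mult in H. lra. }
 pose proof (Cmod_ge_0 (Cminus x (Cplus (Cmult a y) (Cmult b z)))).
 pose proof (Cmod_ge_0 x). pose proof (Cmod_ge_0 y). pose proof (Cmod_ge_0 z).
 pose proof (Cmod_ge_0 a). pose proof (Cmod_ge_0 b).
 set (p := Cmod a * Cmod y) in *. set (q := Cmod b * Cmod z) in *.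
 assert (0 <= p) by (unfold p; nra). assert (0 <= q) by (unfold q; nra).
 replace (3 * Cmod a ^ 2 * Cmod y ^ 2) with (3 * p ^ 2) by (unfold p; ring).
 replace (3 * Cmod b ^ 2 * Cmod z ^ 2) with (3 * q ^ 2) by (unfold q; ring).
 assert (Cmod (Cminus x (Cplus (Cmult a y) (Cmult b z))) ^ 2 <= (Cmod x + p + q) ^ 2) by (apply pow_incr; lra).
 pose proof (pow2_ge_0 (Cmod x - p)). pose proof (pow2_ge_0 (Cmod x - q)). pose proof (pow2_ge_0 (p - q)). nra. Qed.

Lemma dpart_Hs n s F0 u : in_Hs n s u -> in_Hs n s (dpart F0 u).
Proof. intros Hu. apply (in_Hs_sb n s _ (zsumR n (fun k => sweight n s k * Cmod (u k) ^ 2))). intros F HF.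
 eapply Rle_trans; [|apply (in_Hs_partial n s u F Hu HF)]. apply sumR_le. intros k _.
 rewrite dpart_val. destruct (inb F0 k). rewrite Cmod_0. replace (0 ^ 2) with 0 by ring. rewrite Rmult_0_r.
 apply Rmult_le_pos; [apply Rlt_le, Rpower_pos | apply pow2_ge_0]. lra. Qed.

Lemma split_u F0 u : lincomb (RtoC 1) (dpart F0 u) (RtoC 1) (trunc F0 u) = u.
Proof. apply functional_extensionality; intros k. unfold lincomb. symmetry. apply alg_split. reflexivity. Qed.

Lemma zsum_nonneg n s u : in_Hs n s u -> 0 <= zsumR n (fun k => sweight n s k * Cmod (u k) ^ 2).
Proof. intros [S HS]. rewrite (zsumR_eq _ _ _ HS). apply (hasR_nonneg_zsum n (fun k => sweight n s k * Cmod (u k) ^ 2) S); auto.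
 intros; apply Rmult_le_pos; [apply Rlt_le, Rpower_pos|apply pow2_ge_0]. Qed.

Lemma ext_bound n theta rho s m T : is_extension n theta rho s m T ->
  exists c, 0 <= c /\ forall d, in_Hs n (s + m) d -> forall G, finset n G ->
    sumR G (fun k => sweight n s k * Cmod (T d k) ^ 2) <= c * zsumR n (fun k => sweight n (s + m) k * Cmod (d k) ^ 2).
Proof. intros [H1 [H2 [[c [hc Hc]] H4]]]. exists (c ^ 2). split. apply pow2_ge_0.
 intros d Hd G HG. eapply Rle_trans. apply (in_Hs_partial n s (T d) G (H1 d Hd) HG).
 pose proof (Hc d Hd). unfold hs_norm in H.
 pose proof (zsum_nonneg n s (T d) (H1 d Hd)). pose proof (zsum_nonneg n (s + m) d Hd).
 set (X := zsumR n (fun k => sweight n s k * Cmod (T d k) ^ 2)) in *.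
 set (Y := zsumR n (fun k => sweight n (s + m) k * Cmod (d k) ^ 2)) in *.
 assert (sqrt X ^ 2 <= (c * sqrt Y) ^ 2) by (apply pow_incr; split; [apply sqrt_pos|auto]).
 rewrite Rpow_mult_distr, !pow2_sqrt in H5; auto. Qed.

Lemma ext_unique n theta rho s m T T' : is_extension n theta rho s m T -> is_extension n theta rho s m T' ->
  forall u, in_Hs n (s + m) u -> eqv n (T u) (T' u).
Proof. intros HT HT' u Hu k hk.
 destruct (ext_bound _ _ _ _ _ _ HT) as [c1 [hc1 B1]]. destruct (ext_bound _ _ _ _ _ _ HT') as [c2 [hc2 B2]].
 assert (HD := density n s m (fun u k => Cminus (T u k) (T' u k)) (2 * c1 + 2 * c2)).
 assert (eqv n (fun k => Cminus (T u k) (T' u k)) (fun _ => RtoC 0)).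
 { apply HD; auto. lra.
   - intros d Hd G HG. apply Rle_trans with (sumR G (fun k => 2 * (sweight n s k * Cmod (T d k) ^ 2) + 2 * (sweight n s k * Cmod (T' d k) ^ 2))).
     apply sumR_le. intros k0 _. pose proof (Cmod_minus_sq (T d k0) (T' d k0)). pose proof (Rpower_pos (1 + normZ n k0 ^ 2) s).
     change (Rpower (1 + normZ n k0 ^ 2) s) with (sweight n s k0) in H0. nra.
     rewrite sumR_lin. pose proof (B1 d Hd G HG). pose proof (B2 d Hd G HG). lra.
   - intros u0 F0 Hu0 HF0 k0 hk0.
     destruct HT as [_ [L1 [_ R1]]]. destruct HT' as [_ [L2 [_ R2]]].
     set (d := dpart F0 u0). set (t := trunc F0 u0).
     assert (Hd : in_Hs n (s + m) d) by (apply dpart_Hs; auto).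
     assert (Ht : in_Hs n (s + m) t) by (apply trunc_Hs; auto).
     assert (E1 : T u0 k0 = lincomb (RtoC 1) (T d) (RtoC 1) (T t) k0).
     { rewrite <- (L1 d t _ _ Hd Ht k0 hk0). unfold d, t. rewrite split_u. auto. }
     assert (E2 : T' u0 k0 = lincomb (RtoC 1) (T' d) (RtoC 1) (T' t) k0).
     { rewrite <- (L2 d t _ _ Hd Ht k0 hk0). unfold d, t. rewrite split_u. auto. }
     assert (E3 : T t k0 = T' t k0).
     { rewrite (R1 t (trunc_rapid n F0 u0) k0 hk0), (R2 t (trunc_rapid n F0 u0) k0 hk0). auto. }
     simpl. rewrite E1, E2. unfold lincomb. rewrite E3. apply alg1. }
 pose proof (H k hk). simpl in H0. destruct (T u k), (T' u k). unfold Cminus, Cplus, Copp in H0. simpl in H0.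
 injection H0; intros. f_equal; lra. Qed.

Lemma alg_term2 (a b uk vk r c : C) : Cmult (Cmult (Cplus (Cmult a uk) (Cmult b vk)) r) c =
  Cplus (Cmult a (Cmult (Cmult uk r) c)) (Cmult b (Cmult (Cmult vk r) c)).
Proof. Csolve. Qed.

Lemma Prho_ext n theta Q m s rho M : CoefB n Q m rho M -> Rabs s + 2 * INR n <= 2 * INR Q ->
  is_extension n theta rho s m (Prho n theta rho).
Proof. intros HC HQ. split; [|split; [|split]].
 - intros u Hu. apply (existE2 n theta Q m s rho M u HC HQ Hu).
 - intros u v a b Hu Hv j hj.
   destruct (existE2 n theta Q m s rho M u HC HQ Hu) as [Su _].
   destruct (existE2 n theta Q m s rho M v HC HQ Hv) as [Sv _].
   destruct (Su j hj) as [S1 H1]. destruct (Sv j hj) as [S2 H2].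
   change (Prho n theta rho (lincomb a u b v) j) with (zsumC n (term n theta rho (lincomb a u b v) j)).
   unfold lincomb at 2. change (Prho n theta rho u j) with (zsumC n (term n theta rho u j)).
   change (Prho n theta rho v j) with (zsumC n (term n theta rho v j)).
   rewrite (zsumC_eq _ _ _ H1), (zsumC_eq _ _ _ H2). apply zsumC_eq.
   apply (hasC_lin n _ _ _ _ _ a b H1 H2). intros k. unfold term, lincomb. apply alg_term2.
 - exists (sqrt (C1sq n Q s m) * 6 ^ n * M). split.
   pose proof (CoefB_nonneg _ _ _ _ _ HC). apply Rmult_le_pos; auto. apply Rmult_le_pos. apply sqrt_pos. apply pow_le; lra.
   intros u Hu. apply (existE2 n theta Q m s rho M u HC HQ Hu).
 - intros u _ k _. reflexivity. Qed.

Lemma lin_clause n theta Q m s rho1 rho2 M1 M2 (a b : C) T1 T2 T3 :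
  CoefB n Q m rho1 M1 -> CoefB n Q m rho2 M2 -> Rabs s + 2 * INR n <= 2 * INR Q ->
  is_extension n theta rho1 s m T1 -> is_extension n theta rho2 s m T2 ->
  is_extension n theta (fun xi => lincomb a (rho1 xi) b (rho2 xi)) s m T3 ->
  forall u, in_Hs n (s + m) u -> eqv n (T3 u) (lincomb a (T1 u) b (T2 u)).
Proof. intros HC1 HC2 HQ HT1 HT2 HT3 u Hu k hk.
 destruct (ext_bound _ _ _ _ _ _ HT1) as [c1 [hc1 B1]]. destruct (ext_bound _ _ _ _ _ _ HT2) as [c2 [hc2 B2]].
 destruct (ext_bound _ _ _ _ _ _ HT3) as [c3 [hc3 B3]].
 set (ca := Cmod a ^ 2). set (cb := Cmod b ^ 2).
 assert (hca : 0 <= ca) by apply pow2_ge_0. assert (hcb : 0 <= cb) by apply pow2_ge_0.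
 assert (HD := density n s m (fun u k => Cminus (T3 u k) (lincomb a (T1 u) b (T2 u) k)) (3 * c3 + 3 * ca * c1 + 3 * cb * c2)).
 assert (eqv n (fun k => Cminus (T3 u k) (lincomb a (T1 u) b (T2 u) k)) (fun _ => RtoC 0)).
 { apply HD; auto. nra.
   - intros d Hd G HG. apply Rle_trans with (sumR G (fun k => 3 * (sweight n s k * Cmod (T3 d k) ^ 2) + (3 * ca * (sweight n s k * Cmod (T1 d k) ^ 2) + 3 * cb * (sweight n s k * Cmod (T2 d k) ^ 2)))).
     apply sumR_le. intros k0 _. pose proof (Cmod_lc_sq (T3 d k0) (T1 d k0) (T2 d k0) a b). pose proof (Rpower_pos (1 + normZ n k0 ^ 2) s).
     change (Rpower (1 + normZ n k0 ^ 2) s) with (sweight n s k0) in H0. unfold lincomb. fold ca cb in H. nra.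
     rewrite sumR_plus, sumR_lin, sumR_scal. pose proof (B1 d Hd G HG). pose proof (B2 d Hd G HG). pose proof (B3 d Hd G HG).
     pose proof (zsum_nonneg n (s + m) d Hd). nra.
   - intros u0 F0 Hu0 HF0 k0 hk0.
     destruct HT1 as [_ [L1 [_ R1]]]. destruct HT2 as [_ [L2 [_ R2]]]. destruct HT3 as [_ [L3 [_ R3]]].
     set (d := dpart F0 u0). set (t := trunc F0 u0).
     assert (Hd : in_Hs n (s + m) d) by (apply dpart_Hs; auto).
     assert (Ht : in_Hs n (s + m) t) by (apply trunc_Hs; auto).
     assert (E1 : T1 u0 k0 = lincomb (RtoC 1) (T1 d) (RtoC 1) (T1 t) k0).
     { rewrite <- (L1 d t _ _ Hd Ht k0 hk0). unfold d, t. rewrite split_u. auto. }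
     assert (E2 : T2 u0 k0 = lincomb (RtoC 1) (T2 d) (RtoC 1) (T2 t) k0).
     { rewrite <- (L2 d t _ _ Hd Ht k0 hk0). unfold d, t. rewrite split_u. auto. }
     assert (E3 : T3 u0 k0 = lincomb (RtoC 1) (T3 d) (RtoC 1) (T3 t) k0).
     { rewrite <- (L3 d t _ _ Hd Ht k0 hk0). unfold d, t. rewrite split_u. auto. }
     assert (E4 : T3 t k0 = Cplus (Cmult a (T1 t k0)) (Cmult b (T2 t k0))).
     { rewrite (R3 t (trunc_rapid n F0 u0) k0 hk0), (R1 t (trunc_rapid n F0 u0) k0 hk0), (R2 t (trunc_rapid n F0 u0) k0 hk0).
       destruct (existE2 n theta Q m s rho1 M1 t HC1 HQ Ht) as [S1 _].
       destruct (existE2 n theta Q m s rho2 M2 t HC2 HQ Ht) as [S2 _].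
       destruct (S1 k0 hk0) as [X1 H1]. destruct (S2 k0 hk0) as [X2 H2].
       change (Prho n theta rho1 t k0) with (zsumC n (term n theta rho1 t k0)).
       change (Prho n theta rho2 t k0) with (zsumC n (term n theta rho2 t k0)).
       rewrite (zsumC_eq _ _ _ H1), (zsumC_eq _ _ _ H2). apply zsumC_eq.
       apply (hasC_lin n _ _ _ _ _ a b H1 H2). intros k1. unfold term, lincomb. apply alg_term. }
     cbv beta. unfold lincomb at 1 2. rewrite E1, E2, E3. unfold lincomb. apply alg2. auto. }
 pose proof (H k hk). simpl in H0. destruct (T3 u k), (lincomb a (T1 u) b (T2 u) k). unfold Cminus, Cplus, Copp in H0. simpl in H0.
 injection H0; intros. f_equal; lra. Qed.

Definition eQ (Q i : nat) : nat -> nat := fun i' => if Nat.eqb i' i then (2 * Q)%nat else 0%nat.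

Lemma mlen_S n a : mlen (S n) a = (mlen n a + a n)%nat.
Proof. unfold mlen. rewrite seq_S, fold_right_app. simpl. rewrite Nat.add_0_r.
 generalize (a n). induction (seq 0 n); intros; simpl. lia. rewrite IHl. lia. Qed.

Lemma mlen_zero n : mlen n zeroN = 0%nat.
Proof. induction n; auto. rewrite mlen_S, IHn. auto. Qed.

Lemma mlen_eQ n Q i : (mlen n (eQ Q i) <= 2 * Q)%nat.
Proof. induction n. unfold mlen; simpl; lia. rewrite mlen_S. unfold eQ at 2.
 destruct (Nat.eqb_spec n i).
 - subst. assert (forall k, (k <= i)%nat -> mlen k (eQ Q i) = 0%nat).
   { induction k; intros. auto. rewrite mlen_S, IHk by lia. unfold eQ. destruct (Nat.eqb_spec k i); lia. }
   rewrite H; lia.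
 - lia. Qed.

Lemma kpow_zero n l : kpow n zeroN l = 1.
Proof. unfold kpow. rewrite (iprod_ext n _ (fun _ => 1)). rewrite iprod_const, pow1; auto. intros; unfold zeroN; simpl; auto. Qed.

Lemma kpow_eQ n Q i l : (i < n)%nat -> kpow n (eQ Q i) l = IZR (l i) ^ (2 * Q).
Proof. intros hi. unfold kpow. induction n. lia. rewrite iprod_S. unfold eQ at 2.
 destruct (Nat.eqb_spec n i).
 - subst. rewrite (iprod_ext i _ (fun _ => 1)). rewrite iprod_const, pow1; ring.
   intros j hj. unfold eQ. destruct (Nat.eqb_spec j i). lia. auto.
 - rewrite IHn by lia. ring. Qed.

Lemma validN_zero n : validN n zeroN. Proof. intros i _; auto. Qed.
Lemma validN_eQ n Q i : (i < n)%nat -> validN n (eQ Q i).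
Proof. intros hi j hj. unfold eQ. destruct (Nat.eqb_spec j i); auto; lia. Qed.

Lemma coef_from_cstar n theta u c l : cstar_le n theta u c -> validZ n l -> Cmod (u l) <= c.
Proof. intros [hc H] hl. set (z := fun _ : nat => 0%Z).
 assert (Hz : finset n (z :: nil)) by (split; [constructor; auto; constructor|constructor; auto; intros i _; auto]).
 assert (Hl : finset n (l :: nil)) by (split; [constructor; auto; constructor|constructor; auto]).
 specialize (H (z :: nil) (fun _ => RtoC 1) Hz (l :: nil) Hl).
 rewrite !sumR_cons, !sumR_nil in H. unfold lreg, sumC in H. simpl fold_right in H.
 replace (subZ l z) with l in H by (apply functional_extensionality; intros i; unfold subZ, z; lia).
 assert (Cmod (Cplus (Cmult (Cmult (u l) (cocycle n theta l z)) (RtoC 1)) (RtoC 0)) = Cmod (u l)).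
 { replace (Cplus (Cmult (Cmult (u l) (cocycle n theta l z)) (RtoC 1)) (RtoC 0)) with (Cmult (u l) (cocycle n theta l z)) by Csolve.
   rewrite Cmod_mult, Cmod_cocycle; ring. }
 rewrite H0 in H. rewrite Cmod_R, Rabs_R1 in H. apply sq_le; auto. lra. Qed.

Lemma Cmod_delta n a u l : Cmod (delta n a u l) = Rabs (kpow n a l) * Cmod (u l).
Proof. unfold delta. rewrite Cmod_mult, Cmod_R. auto. Qed.

Lemma CoefB_of n Q m rho M :
  (forall xi l, validR n xi -> validZ n l -> Cmod (delta n zeroN (rho xi) l) <= M * Rpower (1 + normR n xi) m) ->
  (forall i, (i < n)%nat -> forall xi l, validR n xi -> validZ n l -> Cmod (delta n (eQ Q i) (rho xi) l) <= M * Rpower (1 + normR n xi) m) ->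
  CoefB n Q m rho M.
Proof. intros H0 H1 xi l hxi hl. split.
 - specialize (H0 xi l hxi hl). rewrite Cmod_delta, kpow_zero, Rabs_R1, Rmult_1_l in H0. auto.
 - intros i hi. specialize (H1 i hi xi l hxi hl). rewrite Cmod_delta, kpow_eQ in H1 by auto.
   rewrite Rabs_right in H1; auto. apply Rle_ge. rewrite pow_mult. apply pow_le, pow2_ge_0. Qed.

Lemma CoefB_sym n theta Q m rho D M : deriv_family n theta rho D -> sym_bound n theta m D (2 * Q) M -> CoefB n Q m rho M.
Proof. intros [HD _] HS. subst rho. apply CoefB_of.
 - intros xi l hxi hl. apply (coef_from_cstar n theta); auto.
   specialize (HS zeroN zeroN (validN_zero n) (validN_zero n)). rewrite !mlen_zero in HS.
   specialize (HS ltac:(lia) xi hxi). simpl INR in HS. rewrite Rminus_0_r in HS. auto.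
 - intros i hi xi l hxi hl. apply (coef_from_cstar n theta); auto.
   specialize (HS (eQ Q i) zeroN (validN_eQ n Q i hi) (validN_zero n)). rewrite !mlen_zero in HS.
   pose proof (mlen_eQ n Q i). specialize (HS ltac:(lia) xi hxi). simpl INR in HS. rewrite Rminus_0_r in HS. auto. Qed.

Lemma fin_choice (P : nat -> R -> Prop) n : (forall i c c', P i c -> c <= c' -> P i c') ->
  (forall i, (i < n)%nat -> exists c, P i c) -> exists c, forall i, (i < n)%nat -> P i c.
Proof. intros Hm. induction n; intros H. exists 0; intros; lia.
 destruct IHn as [c Hc]. intros; apply H; lia. destruct (H n ltac:(lia)) as [c' Hc'].
 exists (Rmax c c'). intros i hi. destruct (Nat.eq_dec i n). subst. eapply Hm; eauto; apply Rmax_r.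
 eapply Hm. apply Hc; lia. apply Rmax_l. Qed.

Lemma CoefB_symb n theta Q m rho : in_symbol n theta m rho -> exists M, CoefB n Q m rho M.
Proof. intros [D [[HD _] HS]]. subst rho.
 set (P := fun (a : nat -> nat) c => forall xi l, validR n xi -> validZ n l -> Cmod (delta n a (D zeroN xi) l) <= c * Rpower (1 + normR n xi) m).
 assert (Hm : forall a c c', P a c -> c <= c' -> P a c').
 { intros a c c' Hc hle xi l hxi hl. eapply Rle_trans. apply Hc; auto. apply Rmult_le_compat_r; auto. apply Rlt_le, Rpower_pos. }
 assert (Hget : forall a, validN n a -> exists c, P a c).
 { intros a ha. destruct (HS a zeroN ha (validN_zero n)) as [c Hc]. exists c. intros xi l hxi hl.
   apply (coef_from_cstar n theta); auto. specialize (Hc xi hxi). rewrite mlen_zero in Hc. simpl INR in Hc. rewrite Rminus_0_r in Hc. auto. }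
 destruct (Hget zeroN (validN_zero n)) as [c0 H0].
 destruct (fin_choice (fun i c => P (eQ Q i) c) n) as [c1 H1].
 intros; eapply Hm; eauto. intros i hi. apply Hget, validN_eQ; auto.
 exists (Rmax c0 c1). apply CoefB_of.
 - apply (Hm zeroN c0); auto. apply Rmax_l.
 - intros i hi. apply (Hm (eQ Q i) c1); auto. apply Rmax_r. Qed.

Lemma hs_norm_eqv n s u v : eqv n u v -> hs_norm n s u = hs_norm n s v.
Proof. intros H. unfold hs_norm, zsumR. f_equal. f_equal.
 apply functional_extensionality; intros S. apply propositional_extensionality. split; apply hasR_ext.
 intros k hk; rewrite H; auto. intros k hk; rewrite H; auto. Qed.

Lemma HQ_ok n s : Rabs s + 2 * INR n <= 2 * INR (Z.to_nat (up (Rabs s)) + n).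
Proof. rewrite plus_INR. destruct (archimed (Rabs s)) as [h1 _]. pose proof (Rabs_pos s).
 assert (0 <= up (Rabs s))%Z by (apply le_IZR; lra).
 rewrite (INR_IZR_INZ (Z.to_nat _)), Z2Nat.id by auto. lra. Qed.

Theorem proposition10p4 :
  forall (n : nat) (theta : nat -> nat -> R), (2 <= n)%nat -> antisym n theta ->
  forall m s : R,
  (forall rho, in_symbol n theta m rho ->
     (exists T, is_extension n theta rho s m T) /\
     (forall T T', is_extension n theta rho s m T -> is_extension n theta rho s m T' ->
        forall u, in_Hs n (s + m) u -> eqv n (T u) (T' u))) /\
  (forall rho1 rho2 (a b : C), in_symbol n theta m rho1 -> in_symbol n theta m rho2 ->
     forall T1 T2 T3, is_extension n theta rho1 s m T1 -> is_extension n theta rho2 s m T2 ->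
     is_extension n theta (fun xi => lincomb a (rho1 xi) b (rho2 xi)) s m T3 ->
     forall u, in_Hs n (s + m) u -> eqv n (T3 u) (lincomb a (T1 u) b (T2 u))) /\
  (exists (N : nat) (c : R), 0 <= c /\
     forall rho D, in_symbol n theta m rho -> deriv_family n theta rho D ->
     forall M, sym_bound n theta m D N M ->
     forall T, is_extension n theta rho s m T ->
     forall u, in_Hs n (s + m) u -> hs_norm n s (T u) <= c * M * hs_norm n (s + m) u).
Proof. intros n theta _ _ m s. set (Q := (Z.to_nat (up (Rabs s)) + n)%nat).
 assert (HQ : Rabs s + 2 * INR n <= 2 * INR Q) by apply HQ_ok.
 split; [|split].
 - intros rho Hr. destruct (CoefB_symb n theta Q m rho Hr) as [M HC]. split.
   exists (Prho n theta rho). apply (Prho_ext n theta Q m s rho M HC HQ).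
   intros T T' HT HT'. apply (ext_unique n theta rho s m T T' HT HT').
 - intros rho1 rho2 a b H1 H2. destruct (CoefB_symb n theta Q m rho1 H1) as [M1 HC1].
   destruct (CoefB_symb n theta Q m rho2 H2) as [M2 HC2].
   intros T1 T2 T3. apply (lin_clause n theta Q m s rho1 rho2 M1 M2 a b T1 T2 T3); auto.
 - exists (2 * Q)%nat, (sqrt (C1sq n Q s m) * 6 ^ n). split.
   apply Rmult_le_pos. apply sqrt_pos. apply pow_le; lra.
   intros rho D Hr HD M HS T HT u Hu.
   pose proof (CoefB_sym n theta Q m rho D M HD HS) as HC.
   pose proof (Prho_ext n theta Q m s rho M HC HQ) as HP.
   rewrite (hs_norm_eqv n s (T u) (Prho n theta rho u)) by (apply (ext_unique n theta rho s m); auto).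
   apply (existE2 n theta Q m s rho M u HC HQ Hu). Qed.
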